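(* Let $s\geqslant1$. The Beth model $\mathcal{B}_s$ forces (at its root) the universal closures of all instances, with types $\leqslant s$, of the following axioms for lawless functionals ($1\leqslant n\leqslant s$): (LL1) $\exists\mathcal F^n(\forall y\leqslant x)(\mathcal F(y)=F^n(y))$; (LL2) $\mathcal F^n=\mathcal G^n\vee\mathcal F^n\neq\mathcal G^n$; (LL3) $\varphi(\mathcal H^n)\supset\exists x\forall\mathcal G^n[(\forall y<x)(\mathcal G(y)=\mathcal H(y))\supset\varphi(\mathcal G)]$, for every formula $\varphi$ of $LP_s$ with $sort(\varphi)\leqslant n$ having no free variables of type $n$ over non-lawlike functionals other than $\mathcal H^n$.
   Context: $sort(\varphi)$ is the maximal type of the free variables of $\varphi$ (0 if none); number variables have type 0, functional variables $F^n,A^n,\mathcal F^n$ have type $n$; non-lawlike variables of type $n$ are the $F^n$ and $\mathcal F^n$. Language $L_s$ ($s\geqslant1$). Variables: $x,y,z,\dots$ of type 0 (natural numbers); for $1\leqslant n\leqslant s$, variables $F^n,G^n,\dots$ (over $n$-functionals), $A^n,B^n,\dots$ (over lawlike $n$-functionals), $\mathcal{F}^n,\mathcal{G}^n,\dots$ (over lawless $n$-functionals). Constants $0$, $K^n$. Terms/$n$-functionals: number variables and $0$ are terms; type-$n$ variables and $K^n$ are $n$-functionals; $St,t+\tau,t\cdot\tau$ terms; $N^n(Z)$ an $n$-functional; $Z(t)=Ap^1(Z,t)$ a term for a 1-functional $Z$; $Z(t)=Ap^{n+1}(Z,t)$ an $n$-functional for an $(n+1)$-functional $Z$. Atomic formulas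 $t=_0\tau$, $Z=_nV$; formulas with $\bot,\wedge,\vee,\supset,\forall,\exists$, $\neg\varphi:=\varphi\supset\bot$. $LP_s$ adds atomic formulas $\vdash_z\varphi(\bar X)$ for terms $z$ and formulas $\varphi$ of $L_s$ with free variables in $\bar X$. Beth model $\mathcal{B}_s$. Path = maximal linearly ordered subset; path through $x$ = path containing $x$. $b^{(m)}$: length-$m$ sequences; $b^*$: finite sequences, $y\leqslant x$ iff $x$ is an initial segment of $y$. $a_0=\omega$, $d_0=\{\langle x\rangle:x\in\omega^*\}$, $\langle x\rangle\preccurlyeq_0\langle y\rangle$ iff $x\leqslant y$. For $k\geqslant1$: $a_k$ = partial $f:d_{k-1}\times\omega\dashrightarrow a_{k-1}$, monotonic ($y\preccurlyeq_{k-1}x\Rightarrow f(x,\cdot)\subseteq f(y,\cdot)$) and complete (for each path $S$ in $d_{k-1}$, $\bigcup_{x\in S}f(x,\cdot)$ total); $d_k=\bigcup_m a_0^{(m)}\times\dots\times a_k^{(m)}$, $x\preccurlyeq_ky$ iff $\langle x\rangle_i\leqslant\langle y\rangle_i$ for $i\leqslant k$, $lh(x)=m$. Nodes $M=d_{s-1}$, $\preccurlyeq=\preccurlyeq_{s-1}$, root $\varepsilon$; $\bar\alpha(k)=\langle\alpha_0,\dots,\alpha_{k-1}\rangle\in d_{k-1}$. Domains: $\omega$; $a_k$; $b_k=\{f\in a_k:f(\text{root},\cdot)\text{ total}\}$; $l_k=\{\nu_k(\xi):\xi\in c_k\}$, $c_k$ = maps $\xi:\omega\times a_{k-1}\to a_{k-1}$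 with each $\xi(n,\cdot)$ bijective, $\nu_k(\xi)(x,n)=\xi(n,\langle\langle x\rangle_{k-1}\rangle_n)$ if $n<lh(x)$, else undefined. Interpretations: $\widehat K^1(x,n)=0$, $\widehat K^{k+1}(x,n)=\widehat K^k$; usual $0,S,+,\cdot$; $N^k\mapsto S^k$ ($S^0(x)=x+1$, $S^{n+1}(f)=S^n\circ f$); at $\alpha$, $Ap^k(f,n)\mapsto f(\bar\alpha(k),n)$; $Z^{[\alpha]}$ is the possibly undefined value. $Val(\alpha,Z=_kV)=T$ iff both defined and equal; $Val(\alpha,\vdash_t\varphi)=T$ iff $t^{[\alpha]}$ defined and some $\gamma\succcurlyeq\alpha$ with $lh(\gamma)=t^{[\alpha]}$ forces $\varphi$. Forcing (Beth): atomic: every path through $\alpha$ meets $\beta$ with $Val=T$; $\alpha\not\Vdash\bot$; $\wedge$ componentwise; $\vee$ and $\exists$: every path through $\alpha$ meets a node forcing a disjunct / an instance $\psi(c)$; $\supset$: every $\beta\preccurlyeq\alpha$ forcing the antecedent forces the consequent; $\forall$: all instances forced at $\alpha$. $\mathcal B_s\Vdash\varphi$ iff $\varepsilon\Vdash\varphi$. *)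

(* Defs.v *)
From Stdlib Require Import Arith Bool List ClassicalEpsilon.
Import ListNotations.

(* R k  : raw k-functionals (R 0 = nat);
                 Tup k : raw tuples (x_0,...,x_k) of lists, x_i : list (R i).
   R (S k) = Tup k -> nat -> option (R k)   (partial maps d_k x w -> a_k). *)
Fixpoint RT (k : nat) : Type * Type :=
  match k with
  | 0 => @pair Type Type nat (list nat)
  | S k' => @pair Type Type (snd (RT k') -> nat -> option (fst (RT k')))
             (snd (RT k') * list (snd (RT k') -> nat -> option (fst (RT k'))))%type
  end.
Definition R (k : nat) : Type := fst (RT k).
Definition Tup (k : nat) : Type := snd (RT k).

Definition lastc (k : nat) : Tup k -> list (R k) :=
  match k return Tup k -> list (R k) with
  | 0 => fun x => x
  | S k' => fun x => snd x
  end.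
Definition lh (k : nat) (x : Tup k) : nat := length (lastc k x).

(* y <= x iff x is an initial segment of y ; we write prefix x y *)
Definition prefix {A : Type} (l1 l2 : list A) : Prop := exists l, l2 = l1 ++ l.

Fixpoint leT (k : nat) : Tup k -> Tup k -> Prop :=
  match k return Tup k -> Tup k -> Prop with
  | 0 => fun x y => prefix (y : list nat) (x : list nat)
  | S k' => fun x y => leT k' (fst x) (fst y) /\ prefix (snd y) (snd x)
  end.

Definition chain (k : nat) (V P : Tup k -> Prop) : Prop :=
  (forall x, P x -> V x) /\
  (forall x y, P x -> P y -> leT k x y \/ leT k y x).
Definition isPath (k : nat) (V P : Tup k -> Prop) : Prop :=
  chain k V P /\
  (forall Q, chain k V Q -> (forall x, P x -> Q x) -> forall x, Q x -> P x).

(* lev k = (membership in a_k, membership in d_k).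
   Elements of a_(k+1) are represented canonically: undefined outside d_k. *)
Fixpoint lev (k : nat) : (R k -> Prop) * (Tup k -> Prop) :=
  match k return (R k -> Prop) * (Tup k -> Prop) with
  | 0 => ((fun _ => True), (fun _ => True))
  | S k' =>
      let inAk := fst (lev k') in
      let vk := snd (lev k') in
      let inAS : R (S k') -> Prop := fun f =>
        (forall (x : Tup k') m v, f x m = Some v -> vk x /\ inAk v) /\
        (forall (x y : Tup k'), vk x -> vk y -> leT k' y x ->
            forall m v, f x m = Some v -> f y m = Some v) /\
        (forall P, isPath k' vk P -> forall m, exists x, P x /\ f x m <> None) in
      (inAS, fun x : Tup (S k') =>
               vk (fst x) /\ Forall inAS (snd x) /\ length (snd x) = lh k' (fst x))
  end.
Definition inA (k : nat) : R k -> Prop := fst (lev k).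
Definition validD (k : nat) : Tup k -> Prop := snd (lev k).

Fixpoint rootT (k : nat) : Tup k :=
  match k return Tup k with
  | 0 => @nil nat
  | S k' => (rootT k', @nil (R (S k')))
  end.

Definition dflt (k : nat) : R k :=
  match k return R k with
  | 0 => 0
  | S k' => fun _ _ => None
  end.

Definition inB (k : nat) (f : R (S k)) : Prop :=
  inA (S k) f /\ forall m, f (rootT k) m <> None.

Definition inL (k : nat) (f : R (S k)) : Prop :=
  exists xi : nat -> R k -> R k,
    (forall m,
        (forall v, inA k v -> inA k (xi m v)) /\
        (forall v w, inA k v -> inA k w -> xi m v = xi m w -> v = w) /\
        (forall w, inA k w -> exists v, inA k v /\ xi m v = w)) /\
    (forall (x : Tup k) m,
        (validD k x /\ m < lh k x -> f x m = Some (xi m (nth m (lastc k x) (dflt k)))) /\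
        (~ (validD k x /\ m < lh k x) -> f x m = None)).

Fixpoint Kc (n : nat) : R (S n) :=
  match n return R (S n) with
  | 0 => fun (x : Tup 0) (m : nat) =>
           if excluded_middle_informative (validD 0 x) then Some (0 : R 0) else None
  | S n' => fun (x : Tup (S n')) (m : nat) =>
           if excluded_middle_informative (validD (S n') x) then Some (Kc n') else None
  end.

Fixpoint Sfun (n : nat) : R n -> R n :=
  match n return R n -> R n with
  | 0 => fun (v : nat) => S v
  | S n' => fun (f : R (S n')) (x : Tup n') (m : nat) => option_map (Sfun n') (f x m)
  end.

Fixpoint trunc (d j : nat) : Tup (d + j) -> Tup j :=
  match d return Tup (d + j) -> Tup j with
  | 0 => fun x => x
  | S d' => fun x => trunc d' j (fst x)
  end.
Definition trunc_opt (k j : nat) (x : Tup k) : option (Tup j) :=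
  match le_dec j k with
  | left h => Some (trunc (k - j) j (eq_rect k Tup x _ (eq_sym (Nat.sub_add j k h))))
  | right _ => None
  end.

(* Syntax.  Functional variables: kind (F general, A lawlike, L lawless),
   type S n (n : nat), index i.   tm n : terms of type n (tm 0 = number terms). *)
Inductive kind : Type := KF | KA | KL.
Definition kind_eqb (a b : kind) : bool :=
  match a, b with KF, KF | KA, KA | KL, KL => true | _, _ => false end.

Inductive tm : nat -> Type :=
| tvar0 (i : nat) : tm 0
| tzero : tm 0
| tS (t : tm 0) : tm 0
| tplus (t u : tm 0) : tm 0
| tmult (t u : tm 0) : tm 0
| tV (k : kind) (n i : nat) : tm (S n)
| tK (n : nat) : tm (S n)
| tN (n : nat) (Z : tm (S n)) : tm (S n)
| tAp (n : nat) (Z : tm (S n)) (t : tm 0) : tm n.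

Inductive fm : Type :=
| Fbot
| Feq (n : nat) (t u : tm n)
| Fand (p q : fm) | For (p q : fm) | Fimp (p q : fm)
| Fall0 (i : nat) (p : fm) | Fex0 (i : nat) (p : fm)
| FallV (k : kind) (n i : nat) (p : fm)
| FexV (k : kind) (n i : nat) (p : fm)
| Fprov (t : tm 0) (p : fm).

Definition Fneg (p : fm) : fm := Fimp p Fbot.

Fixpoint wf_tm (s : nat) {n : nat} (t : tm n) : Prop :=
  match t with
  | tvar0 _ | tzero => True
  | tS t => wf_tm s t
  | tplus t u | tmult t u => wf_tm s t /\ wf_tm s u
  | tV _ n _ | tK n => S n <= s
  | tN n Z => S n <= s /\ wf_tm s Z
  | tAp n Z t => S n <= s /\ wf_tm s Z /\ wf_tm s t
  end.
Fixpoint wf_fm (s : nat) (allowP : bool) (p : fm) : Prop :=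
  match p with
  | Fbot => True
  | Feq n t u => n <= s /\ wf_tm s t /\ wf_tm s u
  | Fand p q | For p q | Fimp p q => wf_fm s allowP p /\ wf_fm s allowP q
  | Fall0 _ p | Fex0 _ p => wf_fm s allowP p
  | FallV _ n _ p | FexV _ n _ p => S n <= s /\ wf_fm s allowP p
  | Fprov t q => allowP = true /\ wf_tm s t /\ wf_fm s false q
  end.
Definition wfL (s : nat) (p : fm) : Prop := wf_fm s false p.
Definition wfLP (s : nat) (p : fm) : Prop := wf_fm s true p.

Fixpoint tm_has0 (i : nat) {n : nat} (t : tm n) : Prop :=
  match t with
  | tvar0 j => i = j
  | tzero | tV _ _ _ | tK _ => False
  | tS t | tN _ t => tm_has0 i t
  | tplus t u | tmult t u | tAp _ t u => tm_has0 i t \/ tm_has0 i u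
  end.
Fixpoint tm_hasV (k : kind) (n i : nat) {m : nat} (t : tm m) : Prop :=
  match t with
  | tV k' n' i' => k = k' /\ n = n' /\ i = i'
  | tvar0 _ | tzero | tK _ => False
  | tS t | tN _ t => tm_hasV k n i t
  | tplus t u | tmult t u | tAp _ t u => tm_hasV k n i t \/ tm_hasV k n i u
  end.
Fixpoint free0 (i : nat) (p : fm) : Prop :=
  match p with
  | Fbot => False
  | Feq _ t u => tm_has0 i t \/ tm_has0 i u
  | Fand p q | For p q | Fimp p q => free0 i p \/ free0 i q
  | Fall0 j p | Fex0 j p => i <> j /\ free0 i p
  | FallV _ _ _ p | FexV _ _ _ p => free0 i p
  | Fprov t q => tm_has0 i t \/ free0 i q
  end.
Fixpoint freeV (k : kind) (n i : nat) (p : fm) : Prop :=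
  match p with
  | Fbot => False
  | Feq _ t u => tm_hasV k n i t \/ tm_hasV k n i u
  | Fand p q | For p q | Fimp p q => freeV k n i p \/ freeV k n i q
  | Fall0 _ p | Fex0 _ p => freeV k n i p
  | FallV k' n' i' p | FexV k' n' i' p => ~ (k = k' /\ n = n' /\ i = i') /\ freeV k n i p
  | Fprov t q => tm_hasV k n i t \/ freeV k n i q
  end.

Definition isL (n h : nat) (k : kind) (n' i' : nat) : bool :=
  kind_eqb k KL && Nat.eqb n' n && Nat.eqb i' h.
Fixpoint renT (n h g : nat) {m : nat} (t : tm m) : tm m :=
  match t in tm m return tm m with
  | tvar0 j => tvar0 j
  | tzero => tzero
  | tS t => tS (renT n h g t)
  | tplus t u => tplus (renT n h g t) (renT n h g u)
  | tmult t u => tmult (renT n h g t) (renT n h g u)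
  | tV k' n' i' => if isL n h k' n' i' then tV k' n' g else tV k' n' i'
  | tK n' => tK n'
  | tN n' Z => tN n' (renT n h g Z)
  | tAp n' Z t => tAp n' (renT n h g Z) (renT n h g t)
  end.
Fixpoint renL (n h g : nat) (p : fm) : fm :=
  match p with
  | Fbot => Fbot
  | Feq m t u => Feq m (renT n h g t) (renT n h g u)
  | Fand p q => Fand (renL n h g p) (renL n h g q)
  | For p q => For (renL n h g p) (renL n h g q)
  | Fimp p q => Fimp (renL n h g p) (renL n h g q)
  | Fall0 j p => Fall0 j (renL n h g p)
  | Fex0 j p => Fex0 j (renL n h g p)
  | FallV k' n' i' p => if isL n h k' n' i' then FallV k' n' i' p
                        else FallV k' n' i' (renL n h g p)
  | FexV k' n' i' p => if isL n h k' n' i' then FexV k' n' i' p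
                       else FexV k' n' i' (renL n h g p)
  | Fprov t q => Fprov (renT n h g t) (renL n h g q)
  end.
Fixpoint freefor (n h g : nat) (p : fm) : Prop :=
  match p with
  | Fbot | Feq _ _ _ => True
  | Fand p q | For p q | Fimp p q => freefor n h g p /\ freefor n h g q
  | Fall0 _ p | Fex0 _ p => freefor n h g p
  | FallV k' n' i' p | FexV k' n' i' p =>
      if isL n h k' n' i' then True
      else ((k' = KL /\ n' = n /\ i' = g) -> ~ freeV KL n h p) /\ freefor n h g p
  | Fprov _ q => freefor n h g q
  end.

Record env : Type := mkEnv {
  e0 : nat -> nat;
  eV : kind -> forall n : nat, nat -> R (S n) }.

Definition upd0 (rho : env) (i c : nat) : env :=
  mkEnv (fun j => if Nat.eqb i j then c else e0 rho j) (eV rho).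
Definition updV (rho : env) (k : kind) (n i : nat) (c : R (S n)) : env :=
  mkEnv (e0 rho)
    (fun k' n' i' =>
       match Nat.eq_dec n n' with
       | left e => if kind_eqb k k' && Nat.eqb i i'
                   then eq_rect n (fun m => R (S m)) c n' e
                   else eV rho k' n' i'
       | right _ => eV rho k' n' i'
       end).

Definition dom (k : kind) (n : nat) (c : R (S n)) : Prop :=
  match k with
  | KF => inA (S n) c
  | KA => inB n c
  | KL => inL n c
  end.
Definition envOK (s : nat) (rho : env) : Prop :=
  forall k n i, S n <= s -> dom k n (eV rho k n i).

(* value of a term at node alpha of M = d_(s-1) (None = undefined) *)
Fixpoint ev (s : nat) (alpha : Tup (pred s)) (rho : env) {n : nat} (t : tm n)
  : option (R n) :=
  match t in tm n return option (R n) with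
  | tvar0 i => Some (e0 rho i : R 0)
  | tzero => Some (0 : R 0)
  | tS t => match ev s alpha rho t with Some a => Some (S a : R 0) | None => None end
  | tplus t u =>
      match ev s alpha rho t, ev s alpha rho u with
      | Some a, Some b => Some ((a + b : nat) : R 0) | _, _ => None end
  | tmult t u =>
      match ev s alpha rho t, ev s alpha rho u with
      | Some a, Some b => Some ((a * b : nat) : R 0) | _, _ => None end
  | tV k n i => Some (eV rho k n i)
  | tK n => Some (Kc n)
  | tN n Z => option_map (Sfun (S n)) (ev s alpha rho Z)
  | tAp n Z t =>
      match ev s alpha rho Z with
      | Some f =>
          match ev s alpha rho t with
          | Some m =>
              match trunc_opt (pred s) n alpha with
              | Some x => f x m
              | None => None
              end
          | None => None
          end
      | None => None
      end
  end.

Fixpoint force (s : nat) (alpha : Tup (pred s)) (rho : env) (p : fm) {struct p} : Prop :=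
  match p with
  | Fbot => False
  | Feq n t u =>
      forall P, isPath (pred s) (validD (pred s)) P -> P alpha ->
        exists beta, P beta /\
          exists v, ev s beta rho t = Some v /\ ev s beta rho u = Some v
  | Fprov t q =>
      forall P, isPath (pred s) (validD (pred s)) P -> P alpha ->
        exists beta, P beta /\
          exists m, ev s beta rho t = Some (m : R 0) /\
            exists gamma, validD (pred s) gamma /\ leT (pred s) beta gamma /\
              lh (pred s) gamma = m /\ force s gamma rho q
  | Fand p q => force s alpha rho p /\ force s alpha rho q
  | For p q =>
      forall P, isPath (pred s) (validD (pred s)) P -> P alpha ->
        exists beta, P beta /\ (force s beta rho p \/ force s beta rho q)
  | Fimp p q =>
      forall beta, validD (pred s) beta -> leT (pred s) beta alpha ->
        force s beta rho p -> force s beta rho q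
  | Fall0 i p => forall c : nat, force s alpha (upd0 rho i c) p
  | Fex0 i p =>
      forall P, isPath (pred s) (validD (pred s)) P -> P alpha ->
        exists beta, P beta /\ exists c : nat, force s beta (upd0 rho i c) p
  | FallV k n i p => forall c, dom k n c -> force s alpha (updV rho k n i c) p
  | FexV k n i p =>
      forall P, isPath (pred s) (validD (pred s)) P -> P alpha ->
        exists beta, P beta /\ exists c, dom k n c /\ force s beta (updV rho k n i c) p
  end.

Definition root_forces (s : nat) (rho : env) (p : fm) : Prop :=
  force s (rootT (pred s)) rho p.

(* Bounded quantifiers as abbreviations:
   (forall y <= x) p := forall y ((exists z, y + z = x) -> p)
   (forall y <  x) p := forall y ((exists z, S (y + z) = x) -> p)
   with z := S (x + y), distinct from x and y. *)
Definition Fall_le (y x : nat) (p : fm) : fm :=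
  Fall0 y (Fimp (Fex0 (S (x + y)) (Feq 0 (tplus (tvar0 y) (tvar0 (S (x + y)))) (tvar0 x))) p).
Definition Fall_lt (y x : nat) (p : fm) : fm :=
  Fall0 y (Fimp (Fex0 (S (x + y))
                   (Feq 0 (tS (tplus (tvar0 y) (tvar0 (S (x + y))))) (tvar0 x))) p).

Definition LL1 (n x y F f : nat) : fm :=
  FexV KL n f (Fall_le y x (Feq n (tAp n (tV KL n f) (tvar0 y)) (tAp n (tV KF n F) (tvar0 y)))).

Definition LL2 (n f g : nat) : fm :=
  For (Feq (S n) (tV KL n f) (tV KL n g)) (Fneg (Feq (S n) (tV KL n f) (tV KL n g))).

Definition LL3 (n h g x y : nat) (p : fm) : fm :=
  Fimp p (Fex0 x (FallV KL n g
    (Fimp (Fall_lt y x (Feq n (tAp n (tV KL n g) (tvar0 y)) (tAp n (tV KL n h) (tvar0 y))))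
          (renL n h g p)))).

(* Main.v *)
Require Import Defs.
From Stdlib Require Import Arith Bool List Lia ClassicalEpsilon Classical FunctionalExtensionality PropExtensionality.
Import ListNotations.

Lemma prefix_refl {A} (l : list A) : prefix l l.
Proof. exists []. now rewrite app_nil_r. Qed.
Lemma prefix_trans {A} (a b c : list A) : prefix a b -> prefix b c -> prefix a c.
Proof. intros [l1 ->] [l2 ->]. exists (l1 ++ l2). now rewrite app_assoc. Qed.
Lemma prefix_len {A} (a b : list A) : prefix a b -> length a <= length b.
Proof. intros [l ->]. rewrite length_app. lia. Qed.
Lemma prefix_firstn {A} (a b : list A) : prefix a b -> a = firstn (length a) b.
Proof. intros [l ->]. rewrite firstn_app, firstn_all, Nat.sub_diag. simpl. now rewrite app_nil_r. Qed.
Lemma firstn_prefix {A} j (b : list A) : prefix (firstn j b) b.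
Proof. exists (skipn j b). now rewrite firstn_skipn. Qed.
Lemma prefix_nil {A} (b : list A) : prefix [] b.
Proof. now exists b. Qed.
Lemma prefix_app {A} (b c : list A) : prefix b (b ++ c).
Proof. now exists c. Qed.

Lemma leT_refl k (x : Tup k) : leT k x x.
Proof. induction k; simpl. apply prefix_refl. split. apply IHk. apply prefix_refl. Qed.
Lemma leT_trans k (x y z : Tup k) : leT k x y -> leT k y z -> leT k x z.
Proof. induction k; simpl. intros; eapply prefix_trans; eauto.
  intros [] []; split. eapply IHk; eauto. eapply prefix_trans; eauto. Qed.

Lemma leT_root k (x : Tup k) : leT k x (rootT k).
Proof. induction k; simpl. apply prefix_nil. split. apply IHk. apply prefix_nil. Qed.

Lemma lh_S k (x : Tup (S k)) : lh (S k) x = length (snd x).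
Proof. reflexivity. Qed.

Lemma valid_lh k (x : Tup (S k)) : validD (S k) x -> lh (S k) x = lh k (fst x).
Proof. intros [_ [_ H]]. exact H. Qed.

Lemma leT_lh k (x y : Tup k) : leT k x y -> lh k y <= lh k x.
Proof. destruct k; simpl; intros H. apply prefix_len, H. apply prefix_len, H. Qed.

Fixpoint trn (k : nat) : nat -> Tup k -> Tup k :=
  match k return nat -> Tup k -> Tup k with
  | 0 => fun j (x : Tup 0) => (firstn j (x : list nat) : Tup 0)
  | S k' => fun j (x : Tup (S k')) => ((trn k' j (fst x), firstn j (snd x)) : Tup (S k'))
  end.

Lemma leT_trn k j (x : Tup k) : leT k x (trn k j x).
Proof. induction k; simpl. apply firstn_prefix. split. apply IHk. apply firstn_prefix. Qed.

Lemma lh_trn k j (x : Tup k) : lh k (trn k j x) = min j (lh k x).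
Proof. destruct k; simpl; unfold lh; simpl; apply length_firstn. Qed.

Lemma valid_trn k j (x : Tup k) : validD k x -> validD k (trn k j x).
Proof. induction k; simpl. auto.
  intros [H1 [H2 H3]]. split. apply IHk, H1. split.
  - rewrite <- (firstn_skipn j (snd x)) in H2. apply Forall_app in H2. apply H2.
  - change (length (firstn j (snd x)) = lh k (trn k j (fst x))). rewrite length_firstn, lh_trn. change (length (snd x) = lh k (fst x)) in H3. rewrite H3. reflexivity.
Qed.

Lemma trn_lh k (x : Tup k) : validD k x -> trn k (lh k x) x = x.
Proof. induction k; simpl. intros _. apply firstn_all.
  intros [H1 [H2 H3]]. destruct x as [x1 x2]. simpl in *.
  change (length x2 = lh k x1) in H3. change (lh (S k) (x1,x2)) with (length x2).
  rewrite firstn_all. f_equal. rewrite H3. apply IHk, H1.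
Qed.

Lemma leT_eq_trn k (x y : Tup k) : validD k y -> leT k x y -> y = trn k (lh k y) x.
Proof. induction k; simpl. intros _ H. apply prefix_firstn, H.
  intros [H1 [H2 H3]] [L1 L2]. destruct y as [y1 y2]. simpl in *. f_equal.
  - change (length y2 = lh k y1) in H3. change (lh (S k) (y1,y2)) with (length y2). rewrite H3. apply IHk; auto.
  - change (lh (S k) (y1,y2)) with (length y2). apply prefix_firstn, L2.
Qed.

Lemma trn_trn k i j (x : Tup k) : trn k i (trn k j x) = trn k (min i j) x.
Proof. induction k; simpl. now rewrite firstn_firstn.
  now rewrite IHk, firstn_firstn. Qed.

Lemma trn_comparable k a b (x : Tup k) : leT k (trn k a x) (trn k b x) \/ leT k (trn k b x) (trn k a x).
Proof. destruct (le_ge_dec a b).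
  - right. replace (trn k a x) with (trn k a (trn k b x)) by (rewrite trn_trn; f_equal; lia). apply leT_trn.
  - left. replace (trn k b x) with (trn k b (trn k a x)) by (rewrite trn_trn; f_equal; lia). apply leT_trn.
Qed.

Lemma pred_comparable k (x y1 y2 : Tup k) : validD k y1 -> validD k y2 ->
  leT k x y1 -> leT k x y2 -> leT k y1 y2 \/ leT k y2 y1.
Proof. intros V1 V2 L1 L2. rewrite (leT_eq_trn k x y1 V1 L1), (leT_eq_trn k x y2 V2 L2). apply trn_comparable. Qed.

Lemma leT_eq_lh k (x y : Tup k) : validD k x -> validD k y -> leT k x y -> lh k x = lh k y -> x = y.
Proof. intros Vx Vy L E. rewrite (leT_eq_trn k x y Vy L), <- E. symmetry. apply trn_lh, Vx. Qed.

Lemma comp_eq_lh k (x y : Tup k) : validD k x -> validD k y -> (leT k x y \/ leT k y x) -> lh k x = lh k y -> x = y.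
Proof. intros Vx Vy [L|L] E. now apply leT_eq_lh. symmetry; now apply leT_eq_lh. Qed.

Lemma lh_root k : lh k (rootT k) = 0.
Proof. destruct k; reflexivity. Qed.
Lemma valid_root k : validD k (rootT k).
Proof. induction k. exact I. split. exact IHk. split. constructor.
  change (0 = lh k (rootT k)). now rewrite lh_root. Qed.

Lemma inAS_eq k (f : R (S k)) : inA (S k) f = ((forall (x : Tup k) m v, f x m = Some v -> validD k x /\ inA k v) /\
        (forall (x y : Tup k), validD k x -> validD k y -> leT k y x ->
            forall m v, f x m = Some v -> f y m = Some v) /\
        (forall P, isPath k (validD k) P -> forall m, exists x, P x /\ f x m <> None)).
Proof. reflexivity. Qed.
Lemma validS_eq k (x : Tup (S k)) : validD (S k) x = (validD k (fst x) /\ Forall (inA (S k)) (snd x) /\ length (snd x) = lh k (fst x)).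
Proof. reflexivity. Qed.

Definition dK (k : nat) : R k :=
  match k return R k with 0 => (0 : R 0) | S k' => Kc k' end.
Lemma Kc_eq k (x : Tup k) m :
  Kc k x m = if excluded_middle_informative (validD k x) then Some (dK k) else None.
Proof. destruct k; reflexivity. Qed.

Lemma path_nonempty k P : isPath k (validD k) P -> exists x, P x.
Proof. intros [C M]. apply NNPP. intros N.
  assert (HQ : chain k (validD k) (fun z => z = rootT k)).
  { split. intros x ->. apply valid_root. intros x y -> ->. left. apply leT_refl. }
  apply N. exists (rootT k). apply (M _ HQ). intros x Hx. exfalso. apply N. now exists x. reflexivity.
Qed.

Lemma path_valid k P x : isPath k (validD k) P -> P x -> validD k x.
Proof. intros [[C _] _]. apply C. Qed.

Lemma inA_dK k : inA k (dK k).
Proof. induction k. exact I.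
  change (inA (S k) (Kc k)). rewrite inAS_eq. split; [|split].
  - intros x m v. rewrite Kc_eq. destruct excluded_middle_informative; [|discriminate].
    intros H. injection H as <-. auto.
  - intros x y Vx Vy L m v. rewrite !Kc_eq.
    destruct (excluded_middle_informative (validD k x)); [|discriminate].
    destruct (excluded_middle_informative (validD k y)); [auto|contradiction].
  - intros P HP m. destruct (path_nonempty k P HP) as [x Hx]. exists x. split; auto.
    rewrite Kc_eq. destruct excluded_middle_informative. discriminate.
    exfalso. apply n. eapply path_valid; eauto.
Qed.

Fixpoint ext (k : nat) : Tup k -> Tup k :=
  match k return Tup k -> Tup k with
  | 0 => fun (x : Tup 0) => ((x : list nat) ++ [0] : Tup 0)
  | S k' => fun (x : Tup (S k')) => ((ext k' (fst x), snd x ++ [Kc k']) : Tup (S k'))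
  end.

Lemma leT_ext k (x : Tup k) : leT k (ext k x) x.
Proof. induction k; simpl. apply prefix_app. split. apply IHk. apply prefix_app. Qed.

Lemma lh_ext k (x : Tup k) : lh k (ext k x) = S (lh k x).
Proof. destruct k. change (length ((x : list nat) ++ [0]) = S (length (x : list nat))). rewrite length_app; simpl; lia.
  change (length (snd x ++ [Kc k]) = S (length (snd x))). rewrite length_app; simpl; lia. Qed.

Lemma valid_ext k (x : Tup k) : validD k x -> validD k (ext k x).
Proof. induction k. auto.
  rewrite !validS_eq. intros [H1 [H2 H3]]. split. apply IHk, H1. split.
  - apply Forall_app. split. exact H2. constructor. apply (inA_dK (S k)). constructor.
  - change (length (snd x ++ [Kc k]) = lh k (ext k (fst x))). rewrite length_app, lh_ext.
    change (length (snd x) = lh k (fst x)) in H3. simpl. lia.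
Qed.

Lemma path_down k P x y : isPath k (validD k) P -> P x -> validD k y -> leT k x y -> P y.
Proof. intros HP Px Vy L. destruct HP as [[C1 C2] M].
  assert (HQ : chain k (validD k) (fun z => P z \/ z = y)).
  { split. intros z [Hz| ->]; auto.
    intros a b [Ha| ->] [Hb| ->]; auto.
    - destruct (C2 a x Ha Px) as [L1|L1].
      + left. eapply leT_trans; eauto.
      + eapply pred_comparable; eauto.
    - destruct (C2 b x Hb Px) as [L1|L1].
      + right. eapply leT_trans; eauto.
      + eapply pred_comparable; eauto.
    - left. apply leT_refl. }
  apply (M _ HQ). auto. auto.
Qed.

Lemma path_geq k P : isPath k (validD k) P -> forall m, exists x, P x /\ m <= lh k x.
Proof. intros HP m. induction m.
  - destruct (path_nonempty k P HP) as [x Hx]. exists x. split; auto. lia.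
  - destruct IHm as [x [Px Lx]].
    destruct (classic (exists y, P y /\ lh k x < lh k y)) as [[y [Py Ly]]|N].
    + exists y. split; auto. lia.
    + exists (ext k x). split; [|rewrite lh_ext; lia].
      destruct HP as [[C1 C2] M].
      assert (HQ : chain k (validD k) (fun z => P z \/ z = ext k x)).
      { split. intros z [Hz| ->]; auto. apply valid_ext; auto.
        assert (Hk : forall a, P a -> leT k (ext k x) a).
        { intros a Pa. destruct (C2 a x Pa Px) as [L|L].
          - assert (lh k a <= lh k x) by (apply NNPP; intro; apply N; exists a; split; auto; lia).
            pose proof (leT_lh _ _ _ L).
            assert (a = x) by (apply leT_eq_lh; auto; lia). subst. apply leT_ext.
          - eapply leT_trans. apply leT_ext. exact L. }
        intros a b [Ha| ->] [Hb| ->]. now apply C2. right. now apply Hk. left. now apply Hk.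
        left. apply leT_refl. }
      apply (M _ HQ). auto. auto.
Qed.

Lemma path_len k P : isPath k (validD k) P -> forall m, exists x, P x /\ lh k x = m.
Proof. intros HP m. destruct (path_geq k P HP m) as [x [Px L]].
  exists (trn k m x). split.
  - eapply path_down; eauto. apply valid_trn. eapply path_valid; eauto. apply leT_trn.
  - rewrite lh_trn. lia.
Qed.

Lemma path_chain k P x y : isPath k (validD k) P -> P x -> P y -> leT k x y \/ leT k y x.
Proof. intros [[_ C] _]. apply C. Qed.

Lemma path_exists k b : validD k b -> exists P, isPath k (validD k) P /\ P b.
Proof. intros Vb.
  set (P := fun z => validD k z /\ exists j, leT k (Nat.iter j (ext k) b) z).
  assert (Vi : forall j, validD k (Nat.iter j (ext k) b)).
  { induction j. exact Vb. simpl. now apply valid_ext. }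
  assert (Li : forall j, lh k (Nat.iter j (ext k) b) = j + lh k b).
  { induction j. reflexivity. simpl. rewrite lh_ext. lia. }
  assert (Mi : forall i j, i <= j -> leT k (Nat.iter j (ext k) b) (Nat.iter i (ext k) b)).
  { intros i j H. induction H. apply leT_refl. eapply leT_trans; [|exact IHle]. simpl. apply leT_ext. }
  assert (CP : chain k (validD k) P).
  { split. intros x [V _]; auto.
    intros x y [Vx [i Li']] [Vy [j Lj']].
    destruct (le_ge_dec i j).
    - apply (pred_comparable k (Nat.iter j (ext k) b)); auto. eapply leT_trans; [apply Mi|]; eauto.
    - apply (pred_comparable k (Nat.iter i (ext k) b)); auto. eapply leT_trans; [apply Mi|]; eauto. }
  exists P. split; [split; auto|].
  - intros Q [QC1 QC2] PQ z Qz. assert (Vz : validD k z) by (apply QC1, Qz). split. exact Vz.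
    pose (w := Nat.iter (lh k z) (ext k) b).
    assert (Pw : P w) by (split; [apply Vi| exists (lh k z); apply leT_refl]).
    assert (Lw : lh k w = lh k z + lh k b) by apply Li.
    destruct (QC2 z w Qz (PQ w Pw)) as [L|L].
    + pose proof (leT_lh _ _ _ L) as H.
      assert (z = w) by (apply (leT_eq_lh k); [auto|apply Vi|auto|lia]).
      exists (lh k z). rewrite H0 at 2. apply leT_refl.
    + exists (lh k z). exact L.
  - split. auto. exists 0. apply leT_refl.
Qed.

Lemma valid_trunc d j (x : Tup (d + j)) : validD (d + j) x -> validD j (trunc d j x).
Proof. induction d. auto. intros [H _]. apply IHd, H. Qed.
Lemma leT_trunc d j (x y : Tup (d + j)) : leT (d + j) x y -> leT j (trunc d j x) (trunc d j y).
Proof. induction d. auto. intros [H _]. apply IHd, H. Qed.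
Lemma lh_trunc d j (x : Tup (d + j)) : validD (d + j) x -> lh j (trunc d j x) = lh (d + j) x.
Proof. induction d. auto. intros H. simpl. rewrite IHd by apply H.
  change (lh (S (d + j)) x) with (lh (S (d+j)) x). symmetry. apply valid_lh, H. Qed.

Lemma proj_path d j P : isPath (d + j) (validD (d + j)) P ->
  isPath j (validD j) (fun y => exists x, P x /\ y = trunc d j x).
Proof. intros HP. split; [split|].
  - intros y [x [Px ->]]. apply valid_trunc. eapply path_valid; eauto.
  - intros y1 y2 [x1 [P1 ->]] [x2 [P2 ->]].
    destruct (path_chain _ _ _ _ HP P1 P2); [left|right]; now apply leT_trunc.
  - intros Q [QC1 QC2] PQ z Qz.
    destruct (path_len _ _ HP (lh j z)) as [x [Px Lx]].
    exists x. split; auto. apply (comp_eq_lh j). apply QC1, Qz.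
    apply valid_trunc. eapply path_valid; eauto.
    apply QC2; auto. apply PQ. now exists x.
    rewrite lh_trunc, Lx. auto. eapply path_valid; eauto.
Qed.

Lemma topt_gen k j (x : Tup k) (h : j <= k) :
  exists d (e : k = d + j), trunc_opt k j x = Some (trunc d j (eq_rect k Tup x _ e)).
Proof. unfold trunc_opt. destruct (le_dec j k); [|contradiction].
  exists (k - j), (eq_sym (Nat.sub_add j k l)). reflexivity. Qed.

Lemma topt_none k j (x : Tup k) : ~ j <= k -> trunc_opt k j x = None.
Proof. intros h. unfold trunc_opt. destruct (le_dec j k); [contradiction|reflexivity]. Qed.

Lemma topt_some k j (x : Tup k) : j <= k -> exists y, trunc_opt k j x = Some y.
Proof. intros h. destruct (topt_gen k j x h) as [d [e E]]. eauto. Qed.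

Lemma topt_valid k j (x : Tup k) y : validD k x -> trunc_opt k j x = Some y -> validD j y /\ lh j y = lh k x.
Proof. intros V E. destruct (le_dec j k) as [h|h]; [|rewrite topt_none in E; auto; discriminate].
  destruct (topt_gen k j x h) as [d [e E']]. rewrite E' in E. injection E as <-.
  subst k. simpl. split. now apply valid_trunc. now apply lh_trunc. Qed.

Lemma topt_leT k j (x x' : Tup k) y y' : leT k x x' -> trunc_opt k j x = Some y ->
  trunc_opt k j x' = Some y' -> leT j y y'.
Proof. intros L E E'. destruct (le_dec j k) as [h|h]; [|rewrite topt_none in E; auto; discriminate].
  unfold trunc_opt in E, E'. destruct (le_dec j k); [|contradiction].
  injection E as <-. injection E' as <-. generalize (eq_sym (Nat.sub_add j k l)).
  generalize (k - j). intros d e. subst k. simpl. now apply leT_trunc. Qed.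

Lemma topt_path k j P : j <= k -> isPath k (validD k) P ->
  isPath j (validD j) (fun y => exists x, P x /\ trunc_opt k j x = Some y).
Proof. intros h HP. unfold trunc_opt. destruct (le_dec j k); [|contradiction].
  generalize (eq_sym (Nat.sub_add j k l)). generalize (k - j). intros d e. subst k. simpl.
  assert (E : (fun y => exists x, P x /\ Some (trunc d j x) = Some y) = (fun y => exists x, P x /\ y = trunc d j x)).
  { apply functional_extensionality. intros y. apply propositional_extensionality. split.
    intros [x [Px H]]. injection H as <-. eauto. intros [x [Px ->]]. eauto. }
  rewrite E. now apply proj_path. Qed.

Lemma kind_eqb_refl k : kind_eqb k k = true.
Proof. destruct k; reflexivity. Qed.
Lemma kind_eqb_eq k k' : kind_eqb k k' = true -> k = k'.
Proof. destruct k, k'; simpl; congruence. Qed.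

Lemma updV_same rho k n i c : eV (updV rho k n i c) k n i = c.
Proof. unfold updV; simpl. destruct (Nat.eq_dec n n) as [e|e]; [|contradiction].
  rewrite kind_eqb_refl, Nat.eqb_refl. simpl. now rewrite (Eqdep_dec.UIP_refl_nat _ e). Qed.

Lemma updV_other rho k n i c k' n' i' : ~ (k = k' /\ n = n' /\ i = i') ->
  eV (updV rho k n i c) k' n' i' = eV rho k' n' i'.
Proof. intros H. unfold updV; simpl. destruct (Nat.eq_dec n n') as [e|e]; auto.
  destruct (kind_eqb k k') eqn:E1; simpl; auto. destruct (Nat.eqb i i') eqn:E2; auto.
  exfalso. apply H. apply kind_eqb_eq in E1. apply Nat.eqb_eq in E2. auto. Qed.

Lemma updV_e0 rho k n i c : e0 (updV rho k n i c) = e0 rho.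
Proof. reflexivity. Qed.
Lemma upd0_eV rho i c : eV (upd0 rho i c) = eV rho.
Proof. reflexivity. Qed.
Lemma upd0_same rho i c : e0 (upd0 rho i c) i = c.
Proof. unfold upd0; simpl. now rewrite Nat.eqb_refl. Qed.
Lemma upd0_other rho i c j : i <> j -> e0 (upd0 rho i c) j = e0 rho j.
Proof. intros H. unfold upd0; simpl. destruct (Nat.eqb i j) eqn:E; auto. apply Nat.eqb_eq in E. contradiction. Qed.

Lemma ev_agree s b rho1 rho2 n (t : tm n) :
  (forall i, tm_has0 i t -> e0 rho1 i = e0 rho2 i) ->
  (forall k m i, tm_hasV k m i t -> eV rho1 k m i = eV rho2 k m i) ->
  ev s b rho1 t = ev s b rho2 t.
Proof. induction t; simpl; intros H0 HV.
  - now rewrite H0.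
  - reflexivity.
  - now rewrite IHt.
  - rewrite IHt1, IHt2; auto.
  - rewrite IHt1, IHt2; auto.
  - now rewrite HV.
  - reflexivity.
  - now rewrite IHt.
  - rewrite IHt1, IHt2; auto.
Qed.

Definition agree (p : fm) (rho1 rho2 : env) : Prop :=
  (forall i, free0 i p -> e0 rho1 i = e0 rho2 i) /\
  (forall k n i, freeV k n i p -> eV rho1 k n i = eV rho2 k n i).

Lemma force_agree s p : forall b rho1 rho2, agree p rho1 rho2 ->
  (force s b rho1 p <-> force s b rho2 p).
Proof. induction p; intros b rho1 rho2 [A0 AV]; simpl in *.
  - tauto.
  - assert (E1 : ev s = ev s) by reflexivity.
    assert (Et : forall b', ev s b' rho1 t = ev s b' rho2 t) by (intros; apply ev_agree; auto).
    assert (Eu : forall b', ev s b' rho1 u = ev s b' rho2 u) by (intros; apply ev_agree; auto).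
    split; intros H P HP Pb; destruct (H P HP Pb) as [b' [Pb' HH]]; exists b'; split; auto;
      [rewrite <- Et, <- Eu|rewrite Et, Eu]; auto.
  - rewrite (IHp1 b rho1 rho2), (IHp2 b rho1 rho2). tauto. split; auto. split; auto.
  - assert (forall b', force s b' rho1 p1 <-> force s b' rho2 p1) by (intros; apply IHp1; split; auto).
    assert (forall b', force s b' rho1 p2 <-> force s b' rho2 p2) by (intros; apply IHp2; split; auto).
    split; intros HH P HP Pb; destruct (HH P HP Pb) as [b' [Pb' X]]; exists b'; split; auto;
      rewrite H, H0 in *; auto.
  - assert (forall b', force s b' rho1 p1 <-> force s b' rho2 p1) by (intros; apply IHp1; split; auto).
    assert (forall b', force s b' rho1 p2 <-> force s b' rho2 p2) by (intros; apply IHp2; split; auto).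
    split; intros HH b' V L; specialize (HH b' V L); rewrite H, H0 in *; auto.
  - assert (forall c, force s b (upd0 rho1 i c) p <-> force s b (upd0 rho2 i c) p).
    { intros c. apply IHp. split.
      - intros j Hj. destruct (Nat.eq_dec i j). subst. now rewrite !upd0_same.
        rewrite !upd0_other; auto.
      - intros; rewrite !upd0_eV; auto. }
    split; intros HH c; apply H; auto.
  - assert (forall b' c, force s b' (upd0 rho1 i c) p <-> force s b' (upd0 rho2 i c) p).
    { intros b' c. apply IHp. split.
      - intros j Hj. destruct (Nat.eq_dec i j). subst. now rewrite !upd0_same.
        rewrite !upd0_other; auto.
      - intros; rewrite !upd0_eV; auto. }
    split; intros HH P HP Pb; destruct (HH P HP Pb) as [b' [Pb' [c X]]]; exists b'; split; auto;
      exists c; apply H; auto.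
  - assert (forall c, force s b (updV rho1 k n i c) p <-> force s b (updV rho2 k n i c) p).
    { intros c. apply IHp. split.
      - intros j Hj. rewrite !updV_e0; auto.
      - intros k' n' i' Hf. destruct (classic (k = k' /\ n = n' /\ i = i')) as [[-> [-> ->]]|N].
        now rewrite !updV_same. rewrite !updV_other by auto. apply AV. split; auto. intros [-> [-> ->]]; auto. }
    split; intros HH c D; apply H; auto.
  - assert (forall b' c, force s b' (updV rho1 k n i c) p <-> force s b' (updV rho2 k n i c) p).
    { intros b' c. apply IHp. split.
      - intros j Hj. rewrite !updV_e0; auto.
      - intros k' n' i' Hf. destruct (classic (k = k' /\ n = n' /\ i = i')) as [[-> [-> ->]]|N].
        now rewrite !updV_same. rewrite !updV_other by auto. apply AV. split; auto. intros [-> [-> ->]]; auto. }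
    split; intros HH P HP Pb; destruct (HH P HP Pb) as [b' [Pb' [c [D X]]]]; exists b'; split; auto;
      exists c; split; auto; apply H; auto.
  - assert (Et : forall b', ev s b' rho1 t = ev s b' rho2 t) by (intros; apply ev_agree; auto).
    assert (forall g, force s g rho1 p <-> force s g rho2 p) by (intros; apply IHp; split; auto).
    split; intros HH P HP Pb; destruct (HH P HP Pb) as [b' [Pb' [m [Em [g [Vg [Lg [Hg Fg]]]]]]]];
      exists b'; split; auto; exists m; (split; [rewrite ?Et in *; rewrite <- ?Et in *; auto|]);
      exists g; repeat split; auto; apply H; auto.
Qed.

Lemma force_mono s p : forall b rho g, validD (pred s) b -> validD (pred s) g -> leT (pred s) g b ->
  force s b rho p -> force s g rho p.
Proof. induction p; intros b rho g Vb Vg L; simpl; auto.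
  - intros H P HP Pg. apply H; auto. eapply path_down; eauto.
  - intros [H1 H2]. split; [apply (IHp1 b)|apply (IHp2 b)]; auto.
  - intros H P HP Pg. apply H; auto. eapply path_down; eauto.
  - intros H b' V' L'. apply H; auto. eapply leT_trans; eauto.
  - intros H c. apply (IHp b); auto.
  - intros H P HP Pg. apply H; auto. eapply path_down; eauto.
  - intros H c D. apply (IHp b); auto.
  - intros H P HP Pg. apply H; auto. eapply path_down; eauto.
  - intros H P HP Pg. apply H; auto. eapply path_down; eauto.
Qed.

Lemma LL2_holds s n f g rho : root_forces s rho (LL2 n f g).
Proof. unfold root_forces, LL2. simpl. intros P HP Pr. exists (rootT (pred s)). split; auto.
  destruct (classic (eV rho KL n f = eV rho KL n g)) as [E|N].
  - left. intros P' HP' Pr'. exists (rootT (pred s)). split; auto. exists (eV rho KL n f). simpl. rewrite E. auto.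
  - right. intros b Vb Lb H. destruct (path_exists _ b Vb) as [P' [HP' Pb]].
    destruct (H P' HP' Pb) as [b' [_ [v [E1 E2]]]]. simpl in E1, E2. congruence.
Qed.

Lemma valid_lastc k (x : Tup k) : validD k x -> Forall (inA k) (lastc k x).
Proof. destruct k. intros _. apply Forall_forall. intros; exact I. intros [_ [H _]]. exact H. Qed.

Lemma leT_lastc k (x y : Tup k) : leT k x y -> prefix (lastc k y) (lastc k x).
Proof. destruct k; simpl. auto. intros [_ H]. exact H. Qed.

Lemma nth_prefix {A} (l1 l2 : list A) m d : prefix l1 l2 -> m < length l1 -> nth m l2 d = nth m l1 d.
Proof. intros [l ->] H. now rewrite app_nth1. Qed.

Lemma path_lower k P x y : isPath k (validD k) P -> P x -> P y ->
  exists z, P z /\ leT k z x /\ leT k z y.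
Proof. intros HP Px Py. destruct (path_chain _ _ _ _ HP Px Py) as [L|L].
  - exists x. split; auto. split; auto. apply leT_refl.
  - exists y. split; auto. split; auto. apply leT_refl.
Qed.

Lemma ev_Ap_V s b rho k n i j :
  ev s b rho (tAp n (tV k n i) (tvar0 j)) =
  match trunc_opt (pred s) n b with Some x => eV rho k n i x (e0 rho j) | None => None end.
Proof. reflexivity. Qed.

Definition swap {A} (a b v : A) : A :=
  if excluded_middle_informative (v = a) then b
  else if excluded_middle_informative (v = b) then a else v.
Lemma swap_a {A} (a b : A) : swap a b a = b.
Proof. unfold swap. destruct excluded_middle_informative; congruence. Qed.
Lemma swap_inv {A} (a b v : A) : swap a b (swap a b v) = v.
Proof. unfold swap. repeat (destruct excluded_middle_informative; subst; try congruence). Qed.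
Lemma swap_pres {A} (Q : A -> Prop) a b v : Q a -> Q b -> Q v -> Q (swap a b v).
Proof. unfold swap. repeat destruct excluded_middle_informative; auto. Qed.

Definition isBij {A} (Q : A -> Prop) (g : A -> A) : Prop :=
  (forall v, Q v -> Q (g v)) /\
  (forall v w, Q v -> Q w -> g v = g w -> v = w) /\
  (forall w, Q w -> exists v, Q v /\ g v = w).

Lemma swap_bij {A} (Q : A -> Prop) a b : Q a -> Q b -> isBij Q (swap a b).
Proof. intros Ha Hb. split; [|split].
  - intros; now apply swap_pres.
  - intros v w _ _ E. rewrite <- (swap_inv a b v), <- (swap_inv a b w), E. reflexivity.
  - intros w Hw. exists (swap a b w). split. now apply swap_pres. apply swap_inv.
Qed.

Definition nuL (n : nat) (xi : nat -> R n -> R n) : R (S n) :=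
  fun (z : Tup n) m =>
    if excluded_middle_informative (validD n z /\ m < lh n z)
    then Some (xi m (nth m (lastc n z) (dflt n))) else None.

Lemma nuL_inL n xi : (forall m, isBij (inA n) (xi m)) -> inL n (nuL n xi).
Proof. intros H. exists xi. split. exact H.
  intros x m. unfold nuL. destruct excluded_middle_informative; tauto. Qed.

Lemma force_Feq s b rho n t u : force s b rho (Feq n t u) =
  (forall P, isPath (pred s) (validD (pred s)) P -> P b ->
        exists beta, P beta /\ exists v, ev s beta rho t = Some v /\ ev s beta rho u = Some v).
Proof. reflexivity. Qed.
Lemma force_For s b rho p q : force s b rho (For p q) =
  (forall P, isPath (pred s) (validD (pred s)) P -> P b ->
        exists beta, P beta /\ (force s beta rho p \/ force s beta rho q)).
Proof. reflexivity. Qed.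
Lemma force_Fimp s b rho p q : force s b rho (Fimp p q) =
  (forall beta, validD (pred s) beta -> leT (pred s) beta b ->
        force s beta rho p -> force s beta rho q).
Proof. reflexivity. Qed.
Lemma force_Fall0 s b rho i p : force s b rho (Fall0 i p) = (forall c : nat, force s b (upd0 rho i c) p).
Proof. reflexivity. Qed.
Lemma force_Fex0 s b rho i p : force s b rho (Fex0 i p) =
  (forall P, isPath (pred s) (validD (pred s)) P -> P b ->
        exists beta, P beta /\ exists c : nat, force s beta (upd0 rho i c) p).
Proof. reflexivity. Qed.
Lemma force_FallV s b rho k n i p : force s b rho (FallV k n i p) = (forall c, dom k n c -> force s b (updV rho k n i c) p).
Proof. reflexivity. Qed.
Lemma force_FexV s b rho k n i p : force s b rho (FexV k n i p) =
  (forall P, isPath (pred s) (validD (pred s)) P -> P b ->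
        exists beta, P beta /\ exists c, dom k n c /\ force s beta (updV rho k n i c) p).
Proof. reflexivity. Qed.

Lemma Fv_mono k n (Fv : R (S n)) b1 b2 t1 t2 m v : inA (S n) Fv ->
  validD k b1 -> validD k b2 -> leT k b2 b1 ->
  trunc_opt k n b1 = Some t1 -> trunc_opt k n b2 = Some t2 -> Fv t1 m = Some v -> Fv t2 m = Some v.
Proof. rewrite inAS_eq. intros [_ [Hm _]] V1 V2 L E1 E2 H.
  destruct (topt_valid _ _ _ _ V1 E1), (topt_valid _ _ _ _ V2 E2).
  apply (Hm t1 t2); auto. eapply topt_leT; eauto. Qed.

Lemma choose_node k n (Fv : R (S n)) P : n <= k -> inA (S n) Fv -> isPath k (validD k) P ->
  forall N, exists b, P b /\ N <= lh k b /\
    forall m tb, m < N -> trunc_opt k n b = Some tb -> Fv tb m <> None.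
Proof. intros hn HF HP. induction N.
  - destruct (path_nonempty _ _ HP) as [b Pb]. exists b. split; auto. split. lia. intros; lia.
  - destruct IHN as [b [Pb [Lb Hb]]].
    destruct (path_len _ _ HP (S N)) as [w [Pw Lw]].
    pose proof HF as HF'. rewrite inAS_eq in HF'. destruct HF' as [_ [_ Hc]].
    destruct (Hc _ (topt_path k n P hn HP) N) as [z [[xN [PxN Ez]] Dz]].
    destruct (path_lower _ _ _ _ HP Pb Pw) as [b1 [Pb1 [L1 L1']]].
    destruct (path_lower _ _ _ _ HP Pb1 PxN) as [b2 [Pb2 [L2 L2']]].
    exists b2. split; auto. split.
    { pose proof (leT_lh _ _ _ (leT_trans _ _ _ _ L2 L1')). lia. }
    intros m tb Hm Eb.
    assert (Vb2 : validD k b2) by (eapply path_valid; eauto).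
    destruct (Nat.eq_dec m N) as [->|Hne].
    + destruct (Fv z N) as [v|] eqn:Ev; [|contradiction].
      rewrite (Fv_mono k n Fv xN b2 z tb N v); auto; try discriminate.
      apply (path_valid k P); auto.
    + destruct (topt_some k n b hn) as [tb0 Eb0].
      assert (m < N) by lia.
      specialize (Hb m tb0 H Eb0). destruct (Fv tb0 m) as [v|] eqn:Ev; [|contradiction].
      rewrite (Fv_mono k n Fv b b2 tb0 tb m v); auto; try discriminate.
      apply (path_valid k P); auto. apply (leT_trans k b2 b1 b); auto.
Qed.

Lemma ev_plus_vars s b rho a c : ev s b rho (tplus (tvar0 a) (tvar0 c)) = Some (e0 rho a + e0 rho c : R 0).
Proof. reflexivity. Qed.
Lemma ev_var s b rho a : ev s b rho (tvar0 a) = Some (e0 rho a : R 0).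
Proof. reflexivity. Qed.

Lemma LL1_holds s n x y F f rho : S n <= s -> x <> y -> envOK s rho ->
  root_forces s rho (LL1 n x y F f).
Proof. intros hn hxy ok. unfold root_forces, LL1, Fall_le. rewrite force_FexV.
  intros P HP Pr.
  set (k := pred s) in *.
  assert (hnk : n <= k) by (unfold k; lia).
  set (Fv := eV rho KF n F).
  assert (HF : inA (S n) Fv) by apply (ok KF n F hn).
  set (X := e0 rho x).
  destruct (choose_node k n Fv P hnk HF HP (S X)) as [b [Pb [Lb Hb]]].
  destruct (topt_some k n b hnk) as [tb Etb].
  assert (Vb : validD k b) by (eapply path_valid; eauto).
  destruct (topt_valid _ _ _ _ Vb Etb) as [Vtb Ltb].
  set (e := fun m => nth m (lastc n tb) (dflt n)).
  set (xi := fun m => match Fv tb m with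
                      | Some v => if excluded_middle_informative (inA n (e m)) then swap (e m) v else (fun w => w)
                      | None => fun w => w end).
  set (c := nuL n xi).
  exists b. split; auto. exists c. split.
  { apply nuL_inL. intros m. unfold xi. destruct (Fv tb m) as [v|] eqn:Ev.
    - destruct excluded_middle_informative.
      + apply swap_bij; auto. rewrite inAS_eq in HF. apply (proj1 HF _ _ _ Ev).
      + split; [|split]; eauto.
    - split; [|split]; eauto. }
  rewrite force_Fall0. intros cy. rewrite force_Fimp. intros be Vbe Lbe Hex.
  rewrite force_Fex0 in Hex. rewrite force_Feq. intros P1 HP1 Pbe. change (Init.Nat.pred s) with k in Vbe, Lbe, Hex, P1, HP1, Pbe |- *.
  exists be. split; auto.
  set (rho' := upd0 (updV rho KL n f c) y cy).
  destruct (path_exists _ _ Vbe) as [Q1 [HQ1 Q1be]].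
  destruct (Hex Q1 HQ1 Q1be) as [b0 [Qb0 [cz Hz]]].
  destruct (path_exists _ b0) as [Q2 [HQ2 Q2b0]]. apply (path_valid k Q1); auto.
  rewrite force_Feq in Hz. destruct (Hz Q2 HQ2 Q2b0) as [b1 [_ [v [E1 E2]]]].
  rewrite ev_plus_vars in E1. rewrite ev_var in E2.
  rewrite <- E2 in E1.
  rewrite (upd0_other _ (S (x + y)) cz x) in E1 by lia.
  rewrite (upd0_other _ y cy x) in E1 by lia. rewrite upd0_same in E1.
  rewrite (upd0_other _ (S (x + y)) cz y) in E1 by lia. rewrite upd0_same in E1.
  rewrite updV_e0 in E1. fold X in E1.
  assert (E3 : cy + cz = X) by (injection E1; auto).
  assert (Hcy : cy <= X) by lia.
  destruct (topt_some k n be hnk) as [tbe Etbe].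
  assert (Lbb : leT n tbe tb) by (eapply topt_leT; eauto).
  destruct (topt_valid _ _ _ _ Vbe Etbe) as [Vtbe Ltbe].
  pose proof (leT_lh _ _ _ Lbe) as Hl.
  assert (HFv : exists v, Fv tb cy = Some v).
  { destruct (Fv tb cy) eqn:E; eauto. exfalso. eapply (Hb cy tb); auto. lia. }
  destruct HFv as [v0 Ev0].
  exists v0. rewrite !ev_Ap_V. fold k. rewrite Etbe.
  unfold rho'. rewrite !upd0_eV, upd0_same. split.
  - rewrite updV_same. unfold c, nuL. destruct excluded_middle_informative as [_|N]; [|exfalso; apply N; split; auto; lia].
    f_equal. rewrite (nth_prefix (lastc n tb)).
    + fold (e cy). unfold xi. rewrite Ev0. destruct excluded_middle_informative as [_|N]. apply swap_a.
      exfalso. apply N. unfold e. apply Forall_nth. now apply valid_lastc. change (length (lastc n tb)) with (lh n tb). lia.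
    + now apply leT_lastc.
    + change (length (lastc n tb)) with (lh n tb). lia.
  - rewrite updV_other by (intros [H _]; discriminate). fold Fv.
    eapply (Fv_mono k n Fv b be); eauto.
Qed.

Fixpoint pm {A} (f : nat -> A -> A) (i : nat) (l : list A) : list A :=
  match l with [] => [] | a :: l' => f i a :: pm f (S i) l' end.

Lemma pm_length {A} (f : nat -> A -> A) i l : length (pm f i l) = length l.
Proof. revert i; induction l; simpl; auto. Qed.
Lemma pm_app {A} (f : nat -> A -> A) i l1 l2 : pm f i (l1 ++ l2) = pm f i l1 ++ pm f (i + length l1) l2.
Proof. revert i; induction l1; intros; simpl. now rewrite Nat.add_0_r. rewrite IHl1. do 3 f_equal. lia. Qed.
Lemma pm_prefix {A} (f : nat -> A -> A) l1 l2 : prefix l1 l2 -> prefix (pm f 0 l1) (pm f 0 l2).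
Proof. intros [l ->]. rewrite pm_app. apply prefix_app. Qed.
Lemma pm_comp {A} (f g : nat -> A -> A) i l : (forall j v, g j (f j v) = v) -> pm g i (pm f i l) = l.
Proof. intros H. revert i; induction l; intros; simpl; auto. now rewrite H, IHl. Qed.
Lemma pm_id {A} (f : nat -> A -> A) i l : (forall j v, f j v = v) -> pm f i l = l.
Proof. intros H. revert i; induction l; intros; simpl; auto. now rewrite H, IHl. Qed.
Lemma pm_nth {A} (f : nat -> A -> A) i l d m : m < length l -> nth m (pm f i l) d = f (i + m) (nth m l d).
Proof. revert i m; induction l; intros i m H; simpl in *. lia. destruct m. now rewrite Nat.add_0_r.
  rewrite IHl by lia. f_equal. lia. Qed.
Lemma pm_Forall {A} (Q : A -> Prop) (f : nat -> A -> A) i l : (forall j v, Q v -> Q (f j v)) ->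
  Forall Q l -> Forall Q (pm f i l).
Proof. intros H F. revert i; induction F; intros; simpl; constructor; auto. Qed.
Lemma pm_fix {A} (f : nat -> A -> A) i l d : (forall m, m < length l -> f (i + m) (nth m l d) = nth m l d) ->
  pm f i l = l.
Proof. revert i; induction l; intros i H; simpl; auto. f_equal.
  specialize (H 0). rewrite Nat.add_0_r in H. apply H. simpl; lia.
  apply IHl. intros m Hm. replace (S i + m) with (i + S m) by lia. apply (H (S m)). simpl; lia. Qed.

Definition piL (n : nat) (pi : nat -> R n -> R n) (k : nat) : nat -> R k -> R k :=
  match Nat.eq_dec n k with
  | left e => eq_rect n (fun j => nat -> R j -> R j) pi k e
  | right _ => fun _ v => v
  end.

Lemma piL_n n pi : piL n pi n = pi.
Proof. unfold piL. destruct (Nat.eq_dec n n) as [e|e]; [|contradiction].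
  now rewrite (Eqdep_dec.UIP_refl_nat _ e). Qed.
Lemma piL_ne n pi k : n <> k -> piL n pi k = fun _ v => v.
Proof. unfold piL. destruct (Nat.eq_dec n k); [contradiction|reflexivity]. Qed.
Lemma piL_inv n pi pi' k : (forall i v, pi' i (pi i v) = v) -> forall i v, piL n pi' k i (piL n pi k i v) = v.
Proof. intros H. unfold piL. destruct (Nat.eq_dec n k); [subst; simpl; auto|auto]. Qed.
Lemma piL_inA n pi k : (forall i v, inA n v -> inA n (pi i v)) -> forall i v, inA k v -> inA k (piL n pi k i v).
Proof. intros H. unfold piL. destruct (Nat.eq_dec n k); [subst; simpl; auto|auto]. Qed.

Fixpoint STp (n : nat) (pi : nat -> R n -> R n) (k : nat) : Tup k -> Tup k :=
  match k return Tup k -> Tup k with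
  | 0 => fun (x : Tup 0) => (pm (piL n pi 0) 0 (x : list nat) : Tup 0)
  | S k' => fun (x : Tup (S k')) => ((STp n pi k' (fst x), pm (piL n pi (S k')) 0 (snd x)) : Tup (S k'))
  end.

Fixpoint SRp (n : nat) (pi' : nat -> R n -> R n) (k : nat) : R k -> R k :=
  match k return R k -> R k with
  | 0 => fun v => v
  | S k' => fun (c : R (S k')) => (fun (x : Tup k') m => option_map (SRp n pi' k') (c (STp n pi' k' x) m)) : R (S k')
  end.

Lemma lastc_STp n pi k x : lastc k (STp n pi k x) = pm (piL n pi k) 0 (lastc k x).
Proof. destruct k; reflexivity. Qed.
Lemma lh_STp n pi k x : lh k (STp n pi k x) = lh k x.
Proof. unfold lh. rewrite lastc_STp. apply pm_length. Qed.

Lemma STp_inv n pi pi' k x : (forall i v, pi' i (pi i v) = v) -> STp n pi' k (STp n pi k x) = x.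
Proof. intros H. induction k; simpl. apply (@pm_comp (R 0)). apply (piL_inv n pi pi' 0 H).
  destruct x as [x1 x2]. simpl. rewrite IHk. f_equal. apply pm_comp, piL_inv, H. Qed.

Lemma leT_STp n pi k x y : leT k x y -> leT k (STp n pi k x) (STp n pi k y).
Proof. induction k; simpl. apply pm_prefix. intros [H1 H2]. split. auto. now apply pm_prefix. Qed.

Lemma valid_STp n pi k x : (forall i v, inA n v -> inA n (pi i v)) -> validD k x -> validD k (STp n pi k x).
Proof. intros H. induction k. auto. rewrite !validS_eq. intros [H1 [H2 H3]]. split; [|split].
  - apply IHk, H1.
  - simpl. apply pm_Forall; auto. apply piL_inA, H.
  - simpl. rewrite pm_length, lh_STp. exact H3.
Qed.

Lemma root_STp n pi k : STp n pi k (rootT k) = rootT k.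
Proof. induction k; simpl; auto. now rewrite IHk. Qed.

Lemma STp_low n pi k x : k < n -> STp n pi k x = x.
Proof. induction k; intros H; simpl. apply pm_id. intros. now rewrite piL_ne by lia.
  destruct x as [x1 x2]. simpl. rewrite IHk by lia. f_equal. apply pm_id. intros. now rewrite piL_ne by lia. Qed.

Lemma trunc_STp n pi d j x : trunc d j (STp n pi (d + j) x) = STp n pi j (trunc d j x).
Proof. induction d; simpl; auto. Qed.

Lemma topt_STp n pi k j x : trunc_opt k j (STp n pi k x) = option_map (STp n pi j) (trunc_opt k j x).
Proof. unfold trunc_opt. destruct (le_dec j k); auto.
  generalize (eq_sym (Nat.sub_add j k l)). generalize (k - j). intros d e. subst k. simpl.
  now rewrite trunc_STp. Qed.

Lemma path_transport k (f g : Tup k -> Tup k) P :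
  (forall x, g (f x) = x) -> (forall x, f (g x) = x) ->
  (forall x, validD k x -> validD k (f x)) -> (forall x, validD k x -> validD k (g x)) ->
  (forall x y, leT k x y -> leT k (f x) (f y)) -> (forall x y, leT k x y -> leT k (g x) (g y)) ->
  isPath k (validD k) P -> isPath k (validD k) (fun z => P (f z)).
Proof. intros gf fg vf vg lf lg [[C1 C2] M]. split; [split|].
  - intros z Hz. rewrite <- (gf z). apply vg. auto.
  - intros a b Ha Hb. destruct (C2 _ _ Ha Hb); [left|right]; rewrite <- (gf a), <- (gf b); auto.
  - intros Q [Q1 Q2] PQ z Qz.
    assert (HQ : chain k (validD k) (fun w => Q (g w))).
    { split. intros w Hw. rewrite <- (fg w). apply vf. auto.
      intros a b Ha Hb. destruct (Q2 _ _ Ha Hb); [left|right]; rewrite <- (fg a), <- (fg b); auto. }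
    apply (M _ HQ). intros w Pw. apply PQ. now rewrite fg. now rewrite gf.
Qed.

Definition perm_pair n (pi pi' : nat -> R n -> R n) : Prop :=
  (forall i v, pi' i (pi i v) = v) /\ (forall i v, pi i (pi' i v) = v) /\
  (forall i v, inA n v -> inA n (pi i v)) /\ (forall i v, inA n v -> inA n (pi' i v)).

Lemma perm_pair_sym n pi pi' : perm_pair n pi pi' -> perm_pair n pi' pi.
Proof. intros [a [b [c d]]]. repeat split; auto. Qed.

Lemma valid_STp_iff n pi pi' k x : perm_pair n pi pi' -> (validD k (STp n pi k x) <-> validD k x).
Proof. intros [a [b [c d]]]. split; intros H.
  - rewrite <- (STp_inv n pi pi' k x a). now apply valid_STp.
  - now apply valid_STp. Qed.

Lemma SR_inv n pi pi' k c : perm_pair n pi pi' -> SRp n pi k (SRp n pi' k c) = c.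
Proof. intros PP. induction k; simpl; auto.
  apply functional_extensionality; intros x. apply functional_extensionality; intros m.
  rewrite (STp_inv n pi pi' k x) by apply PP. destruct (c x m); simpl; auto. now rewrite IHk. Qed.

Lemma SR_inA n pi pi' k c : perm_pair n pi pi' -> inA k c -> inA k (SRp n pi' k c).
Proof. intros PP. revert c. induction k; intros c. auto.
  rewrite !inAS_eq. intros [Hr [Hm Hc]]. split; [|split].
  - intros x m v. simpl. destruct (c (STp n pi' k x) m) as [v0|] eqn:E; simpl; [|discriminate].
    intros H. injection H as <-. destruct (Hr _ _ _ E) as [V I]. split.
    + apply (valid_STp_iff n pi' pi k x (perm_pair_sym _ _ _ PP)); auto.
    + now apply IHk.
  - intros x y Vx Vy L m v. simpl. destruct (c (STp n pi' k x) m) as [v0|] eqn:E; simpl; [|discriminate].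
    intros H. rewrite (Hm (STp n pi' k x) (STp n pi' k y) ) with (v := v0); auto.
    apply valid_STp; auto. apply PP. apply valid_STp; auto. apply PP. now apply leT_STp.
  - intros P HP m.
    assert (HP' : isPath k (validD k) (fun z => P (STp n pi k z))).
    { apply path_transport with (g := STp n pi' k); auto.
      intros; apply STp_inv, PP. intros; apply STp_inv, PP.
      intros; apply valid_STp; auto; apply PP. intros; apply valid_STp; auto; apply PP.
      intros; now apply leT_STp. intros; now apply leT_STp. }
    destruct (Hc _ HP' m) as [z [Pz Dz]]. exists (STp n pi k z). split; auto. simpl.
    rewrite STp_inv by apply PP. destruct (c z m); simpl; congruence.
Qed.

Lemma SR_Sfun n pi' k c : SRp n pi' k (Sfun k c) = Sfun k (SRp n pi' k c).
Proof. revert c. induction k; intros c; simpl; auto.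
  apply functional_extensionality; intros x. apply functional_extensionality; intros m.
  destruct (c (STp n pi' k x) m); simpl; auto. now rewrite IHk. Qed.

Lemma SR_dK n pi pi' k : perm_pair n pi pi' -> SRp n pi' k (dK k) = dK k.
Proof. intros PP. induction k; simpl; auto.
  apply functional_extensionality; intros x. apply functional_extensionality; intros m.
  rewrite !Kc_eq. destruct excluded_middle_informative as [V|V];
    destruct excluded_middle_informative as [V'|V']; simpl; auto.
  - now rewrite IHk.
  - exfalso. apply V'. apply (valid_STp_iff n pi' pi k x (perm_pair_sym _ _ _ PP)), V.
  - exfalso. apply V. apply valid_STp; auto. apply PP.
Qed.

Lemma SR_Kc n pi pi' k : perm_pair n pi pi' -> SRp n pi' (S k) (Kc k) = Kc k.
Proof. intros PP. apply (SR_dK n pi pi' (S k) PP). Qed.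

Lemma SR_low n pi' k c : k <= n -> SRp n pi' k c = c.
Proof. revert c. induction k; intros c H; simpl; auto.
  apply functional_extensionality; intros x. apply functional_extensionality; intros m.
  rewrite STp_low by lia. destruct (c x m); simpl; auto. rewrite IHk; auto. lia. Qed.

Lemma SR_lawlike n pi pi' c : perm_pair n pi pi' -> inB n c -> SRp n pi' (S n) c = c.
Proof. intros PP [HA Hroot]. rewrite inAS_eq in HA. destruct HA as [Hr [Hm _]].
  apply functional_extensionality; intros x. apply functional_extensionality; intros m. simpl.
  replace (option_map (SRp n pi' n) (c (STp n pi' n x) m)) with (c (STp n pi' n x) m) by (destruct (c (STp n pi' n x) m); simpl; auto; f_equal; symmetry; apply SR_low; lia).
  destruct (c (rootT n) m) as [v|] eqn:E; [|exfalso; exact (Hroot m E)].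
  destruct (classic (validD n x)) as [V|V].
  - rewrite (Hm (rootT n) x) with (v := v); auto. rewrite (Hm (rootT n) (STp n pi' n x)) with (v := v); auto.
    apply valid_root. apply valid_STp; auto; apply PP. apply leT_root. apply valid_root. apply leT_root.
  - destruct (c x m) as [v1|] eqn:E1. exfalso. apply V. apply (Hr _ _ _ E1).
    destruct (c (STp n pi' n x) m) as [v2|] eqn:E2; auto. exfalso. apply V.
    apply (valid_STp_iff n pi' pi n x (perm_pair_sym _ _ _ PP)). apply (Hr _ _ _ E2).
Qed.

Lemma isBij_inv {A} (Q : A -> Prop) g h : (forall v, Q v -> Q (g v)) -> (forall v, Q v -> Q (h v)) ->
  (forall v, h (g v) = v) -> (forall v, g (h v) = v) -> isBij Q g.
Proof. intros G H HG GH. split; [|split].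
  - auto.
  - intros v w _ _ E. rewrite <- (HG v), <- (HG w), E. reflexivity.
  - intros w Qw. exists (h w). split; auto. Qed.

Lemma isBij_comp {A} (Q : A -> Prop) g h : isBij Q g -> isBij Q h -> isBij Q (fun v => g (h v)).
Proof. intros [G1 [G2 G3]] [H1 [H2 H3]]. split; [|split].
  - auto.
  - intros v w Qv Qw E. apply H2; auto.
  - intros w Qw. destruct (G3 w Qw) as [v1 [Q1 E1]]. destruct (H3 v1 Q1) as [v2 [Q2 E2]].
    exists v2. split; auto. congruence. Qed.

Lemma SR_dom n pi pi' k m c : perm_pair n pi pi' -> dom k m c -> dom k m (SRp n pi' (S m) c).
Proof. intros PP. destruct k; unfold dom.
  - apply (SR_inA n pi pi' (S m) c PP).
  - intros [HA Hr]. split. apply (SR_inA n pi pi' (S m) c PP HA).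
    intros u. simpl. rewrite root_STp. destruct (c (rootT m) u) eqn:E; simpl; [discriminate|]. exfalso; exact (Hr u E).
  - intros [xi [Hb He]].
    exists (fun u v => SRp n pi' m (xi u (piL n pi' m u v))). split.
    + intros u. apply isBij_comp with (Q := inA m) (g := SRp n pi' m) (h := fun v => xi u (piL n pi' m u v)).
      * apply isBij_inv with (h := SRp n pi m).
        intros; apply SR_inA with (pi := pi); auto.
        intros; apply SR_inA with (pi := pi'); auto. apply perm_pair_sym, PP.
        intros. apply SR_inv, PP. intros. apply SR_inv, perm_pair_sym, PP.
      * apply isBij_comp with (Q := inA m) (g := xi u) (h := piL n pi' m u). apply Hb.
        apply isBij_inv with (h := piL n pi m u).
        apply piL_inA, PP. apply piL_inA, PP. apply piL_inv, PP. apply piL_inv, PP.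
    + intros x u. simpl. destruct (He (STp n pi' m x) u) as [E1 E2]. split.
      * intros [V L]. rewrite E1. simpl. f_equal. f_equal. rewrite lastc_STp, pm_nth. reflexivity.
        unfold lh in L. exact L.
        split. apply valid_STp; auto. apply PP. now rewrite lh_STp.
      * intros N. rewrite E2. reflexivity. rewrite lh_STp.
        rewrite (valid_STp_iff n pi' pi m x (perm_pair_sym _ _ _ PP)). exact N.
Qed.

Definition envS n (pi' : nat -> R n -> R n) (rho : env) : env :=
  mkEnv (e0 rho) (fun k m i => SRp n pi' (S m) (eV rho k m i)).

Lemma ev_S s n pi pi' b rho : perm_pair n pi pi' -> forall m (t : tm m),
  ev s (STp n pi (pred s) b) (envS n pi' rho) t = option_map (SRp n pi' m) (ev s b rho t).
Proof. intros PP m t. induction t.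
  - reflexivity.
  - reflexivity.
  - cbn [ev]. rewrite IHt. destruct (ev s b rho t); reflexivity.
  - cbn [ev]. rewrite IHt1, IHt2. destruct (ev s b rho t1), (ev s b rho t2); reflexivity.
  - cbn [ev]. rewrite IHt1, IHt2. destruct (ev s b rho t1), (ev s b rho t2); reflexivity.
  - reflexivity.
  - cbn [ev]. simpl. f_equal. symmetry. apply (SR_Kc n pi pi' n0 PP).
  - cbn [ev]. rewrite IHt. destruct (ev s b rho t); auto. cbn [option_map]. f_equal. symmetry. apply (SR_Sfun n pi' (S n0)).
  - cbn [ev]. rewrite IHt1, IHt2, topt_STp.
    destruct (ev s b rho t1) as [f|]; simpl; auto.
    destruct (ev s b rho t2) as [u|]; simpl; auto.
    destruct (trunc_opt (pred s) n0 b) as [y|]; simpl; auto.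
    rewrite STp_inv by apply PP. reflexivity.
Qed.

Lemma pathS n pi pi' k P : perm_pair n pi pi' -> isPath k (validD k) P ->
  isPath k (validD k) (fun z => P (STp n pi k z)).
Proof. intros PP HP. apply path_transport with (g := STp n pi' k); auto.
  intros; apply STp_inv, PP. intros; apply STp_inv, PP.
  intros; apply valid_STp; auto; apply PP. intros; apply valid_STp; auto; apply PP.
  intros; now apply leT_STp. intros; now apply leT_STp. Qed.

Lemma option_map_inj n pi pi' k (a b : option (R k)) : perm_pair n pi pi' ->
  option_map (SRp n pi' k) a = option_map (SRp n pi' k) b -> a = b.
Proof. intros PP E. destruct a, b; simpl in *; try discriminate; auto.
  injection E as E. f_equal. rewrite <- (SR_inv n pi pi' k r PP), E. apply SR_inv, PP. Qed.

Lemma force_ext s p b r1 r2 : (forall i, e0 r1 i = e0 r2 i) -> (forall k m i, eV r1 k m i = eV r2 k m i) ->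
  (force s b r1 p <-> force s b r2 p).
Proof. intros H0 HV. apply force_agree. split; auto. Qed.

Lemma envS_eV n pi' r k m i : eV (envS n pi' r) k m i = SRp n pi' (S m) (eV r k m i).
Proof. reflexivity. Qed.

Lemma envS_updV n pi' rho k m i c k' m' i' :
  eV (envS n pi' (updV rho k m i c)) k' m' i' = eV (updV (envS n pi' rho) k m i (SRp n pi' (S m) c)) k' m' i'.
Proof. destruct (classic (k = k' /\ m = m' /\ i = i')) as [[<- [<- <-]]|N].
  - rewrite envS_eV, !updV_same. reflexivity.
  - rewrite envS_eV, !updV_other by auto. reflexivity. Qed.

Lemma force_S s n pi pi' : perm_pair n pi pi' -> forall p b rho,
  force s b rho p <-> force s (STp n pi (pred s) b) (envS n pi' rho) p.
Proof. intros PP. set (k := pred s).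
  assert (PP' := perm_pair_sym _ _ _ PP).
  assert (Inv1 : forall x, STp n pi' k (STp n pi k x) = x) by (intros; apply STp_inv, PP).
  assert (Inv2 : forall x, STp n pi k (STp n pi' k x) = x) by (intros; apply STp_inv, PP').
  assert (Va : forall x, validD k (STp n pi k x) <-> validD k x) by (intros; apply valid_STp_iff with (pi' := pi'); auto).
  assert (Va' : forall x, validD k (STp n pi' k x) <-> validD k x) by (intros; apply valid_STp_iff with (pi' := pi); auto).
  assert (Le : forall x y, leT k x y <-> leT k (STp n pi k x) (STp n pi k y)).
  { intros x y; split; intros H. now apply leT_STp. rewrite <- (Inv1 x), <- (Inv1 y). now apply leT_STp. }
  assert (PF : forall P b, isPath k (validD k) P -> P (STp n pi k b) ->
            isPath k (validD k) (fun z => P (STp n pi k z)) /\ P (STp n pi k b)).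
  { intros P b HP Pb. split; auto. apply pathS with (pi' := pi'); auto. }
  assert (PB : forall P b, isPath k (validD k) P -> P b ->
            isPath k (validD k) (fun z => P (STp n pi' k z)) /\ P (STp n pi' k (STp n pi k b))).
  { intros P b HP Pb. split. apply pathS with (pi' := pi); auto. now rewrite Inv1. }
  induction p; intros b rho.
  - simpl. tauto.
  - rewrite !force_Feq. fold k. split.
    + intros H P HP Pb. destruct (PF P b HP Pb) as [HP' _].
      destruct (H _ HP' Pb) as [b' [Pb' [v [E1 E2]]]].
      exists (STp n pi k b'). split; auto. exists (SRp n pi' n0 v).
      rewrite !ev_S by auto. rewrite E1, E2. auto.
    + intros H P HP Pb. destruct (PB P b HP Pb) as [HP' Pb'].
      destruct (H _ HP' Pb') as [b' [Pb'' [v [E1 E2]]]].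
      rewrite <- (Inv2 b') in E1, E2. rewrite ev_S in E1, E2 by auto.
      exists (STp n pi' k b'). split; auto.
      destruct (ev s (STp n pi' k b') rho t) as [v1|] eqn:F1; [|discriminate].
      exists v1. split; auto. apply (option_map_inj n pi pi' n0); auto. rewrite E2, <- E1. reflexivity.
  - simpl. rewrite (IHp1 b rho), (IHp2 b rho). tauto.
  - rewrite !force_For. fold k. split.
    + intros H P HP Pb. destruct (PF P b HP Pb) as [HP' _].
      destruct (H _ HP' Pb) as [b' [Pb' X]].
      exists (STp n pi k b'). split; auto. now rewrite <- IHp1, <- IHp2.
    + intros H P HP Pb. destruct (PB P b HP Pb) as [HP' Pb'].
      destruct (H _ HP' Pb') as [b' [Pb'' X]].
      exists (STp n pi' k b'). split; auto. rewrite IHp1, IHp2, Inv2. exact X.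
  - rewrite !force_Fimp. fold k. split.
    + intros H g Vg Lg Fg. rewrite <- (Inv2 g) in Fg |- *. rewrite <- IHp1 in Fg. rewrite <- IHp2.
      apply H; auto. now apply Va'. rewrite Le, Inv2. exact Lg.
    + intros H g Vg Lg Fg. rewrite IHp2. apply H. now apply Va. apply (proj1 (Le g b)); auto.
      now rewrite <- IHp1.
  - rewrite !force_Fall0. split; intros H c; specialize (H c); [rewrite IHp in H|rewrite IHp]; exact H.
  - rewrite !force_Fex0. fold k. split.
    + intros H P HP Pb. destruct (PF P b HP Pb) as [HP' _].
      destruct (H _ HP' Pb) as [b' [Pb' [c X]]].
      exists (STp n pi k b'). split; auto. exists c. apply (IHp b' (upd0 rho i c)) in X. exact X.
    + intros H P HP Pb. destruct (PB P b HP Pb) as [HP' Pb'].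
      destruct (H _ HP' Pb') as [b' [Pb'' [c X]]].
      exists (STp n pi' k b'). split; auto. exists c. apply (IHp _ (upd0 rho i c)). rewrite Inv2. exact X.
  - assert (EU : forall b c, force s b (updV (envS n pi' rho) k0 n0 i (SRp n pi' (S n0) c)) p <->
                             force s b (envS n pi' (updV rho k0 n0 i c)) p).
    { intros b' c. apply force_ext. reflexivity. intros. symmetry. apply envS_updV. }
    rewrite !force_FallV. split.
    + intros H c D. rewrite <- (SR_inv n pi' pi (S n0) c PP'). rewrite EU.
      rewrite <- IHp. apply H. apply (SR_dom n pi' pi); auto.
    + intros H c D. rewrite IHp. rewrite <- EU.
      apply H. apply (SR_dom n pi pi'); auto.
  - assert (EU : forall b c, force s b (updV (envS n pi' rho) k0 n0 i (SRp n pi' (S n0) c)) p <->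
                             force s b (envS n pi' (updV rho k0 n0 i c)) p).
    { intros b' c. apply force_ext. reflexivity. intros. symmetry. apply envS_updV. }
    rewrite !force_FexV. fold k. split.
    + intros H P HP Pb. destruct (PF P b HP Pb) as [HP' _].
      destruct (H _ HP' Pb) as [b' [Pb' [c [D X]]]].
      exists (STp n pi k b'). split; auto. exists (SRp n pi' (S n0) c). split. apply (SR_dom n pi pi'); auto.
      rewrite EU. now rewrite <- IHp.
    + intros H P HP Pb. destruct (PB P b HP Pb) as [HP' Pb'].
      destruct (H _ HP' Pb') as [b' [Pb'' [c [D X]]]].
      exists (STp n pi' k b'). split; auto. exists (SRp n pi (S n0) c). split. apply (SR_dom n pi' pi); auto.
      rewrite IHp, Inv2. rewrite <- EU.
      rewrite SR_inv by auto. exact X.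
  - simpl. fold k. split.
    + intros H P HP Pb. destruct (PF P b HP Pb) as [HP' _].
      destruct (H _ HP' Pb) as [b' [Pb' [m [Em [g [Vg [Lg [Hg Fg]]]]]]]].
      exists (STp n pi k b'). split; auto. exists m. split.
      rewrite ev_S by auto. rewrite Em. reflexivity.
      exists (STp n pi k g). split. now apply Va. split. apply (proj1 (Le b' g)); auto. split. now rewrite lh_STp.
      now rewrite <- IHp.
    + intros H P HP Pb. destruct (PB P b HP Pb) as [HP' Pb'].
      destruct (H _ HP' Pb') as [b' [Pb'' [m [Em [g [Vg [Lg [Hg Fg]]]]]]]].
      exists (STp n pi' k b'). split; auto. exists m. split.
      rewrite <- (Inv2 b') in Em. rewrite ev_S in Em by auto.
      destruct (ev s (STp n pi' k b') rho t); simpl in Em; congruence.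
      exists (STp n pi' k g). split. now apply Va'. split. rewrite Le, !Inv2. exact Lg.
      split. now rewrite lh_STp. rewrite IHp, Inv2. exact Fg.
Qed.

Lemma isL_true n h k m i : isL n h k m i = true -> k = KL /\ m = n /\ i = h.
Proof. unfold isL. intros H. apply andb_prop in H as [H H3]. apply andb_prop in H as [H1 H2].
  apply kind_eqb_eq in H1. apply Nat.eqb_eq in H2. apply Nat.eqb_eq in H3. auto. Qed.
Lemma isL_false n h k m i : isL n h k m i = false -> ~ (KL = k /\ n = m /\ h = i).
Proof. unfold isL. intros H [<- [<- <-]]. rewrite kind_eqb_refl, !Nat.eqb_refl in H. discriminate. Qed.

Lemma renT_ev s b rho n h g m (t : tm m) :
  ev s b rho (renT n h g t) = ev s b (updV rho KL n h (eV rho KL n g)) t.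
Proof. induction t; cbn [renT ev]; try reflexivity.
  - now rewrite IHt.
  - now rewrite IHt1, IHt2.
  - now rewrite IHt1, IHt2.
  - destruct (isL n h k n0 i) eqn:E.
    + destruct (isL_true _ _ _ _ _ E) as [-> [-> ->]]. cbn [ev]. now rewrite updV_same.
    + cbn [ev]. rewrite updV_other. reflexivity. now apply isL_false.
  - now rewrite IHt.
  - now rewrite IHt1, IHt2.
Qed.

Lemma renL_force s n h g p : freefor n h g p -> forall b rho,
  force s b rho (renL n h g p) <-> force s b (updV rho KL n h (eV rho KL n g)) p.
Proof. induction p; intros FF b rho; simpl in FF.
  - simpl. tauto.
  - simpl renL. rewrite !force_Feq. setoid_rewrite renT_ev. tauto.
  - simpl renL. simpl. rewrite IHp1, IHp2 by tauto. tauto.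
  - simpl renL. rewrite !force_For. setoid_rewrite IHp1; [|tauto]. setoid_rewrite IHp2; [|tauto]. tauto.
  - simpl renL. rewrite !force_Fimp. setoid_rewrite IHp1; [|tauto]. setoid_rewrite IHp2; [|tauto]. tauto.
  - simpl renL. rewrite !force_Fall0. setoid_rewrite IHp; auto. tauto.
  - simpl renL. rewrite !force_Fex0. setoid_rewrite IHp; auto. tauto.
  - simpl renL. destruct (isL n h k n0 i) eqn:E.
    + destruct (isL_true _ _ _ _ _ E) as [-> [-> ->]]. rewrite !force_FallV.
      assert (forall c, force s b (updV rho KL n h c) p <-> force s b (updV (updV rho KL n h (eV rho KL n g)) KL n h c) p).
      { intros c. apply force_ext. reflexivity. intros k' m' i'.
        destruct (classic (KL = k' /\ n = m' /\ h = i')) as [[<- [<- <-]]|N].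
        now rewrite !updV_same. rewrite !updV_other; auto. }
      split; intros HH c D; apply H; auto.
    + destruct FF as [F1 F2]. rewrite !force_FallV.
      assert (forall c, force s b (updV rho k n0 i c) (renL n h g p) <->
                        force s b (updV (updV rho KL n h (eV rho KL n g)) k n0 i c) p).
      { intros c. rewrite IHp by auto. pose proof (isL_false _ _ _ _ _ E) as NE.
        destruct (classic (k = KL /\ n0 = n /\ i = g)) as [[-> [-> ->]]|N].
        - apply force_agree. split. reflexivity. intros k' m' i' Hf.
          rewrite updV_same.
          destruct (classic (KL = k' /\ n = m' /\ h = i')) as [[<- [<- <-]]|N1].
          + exfalso. apply (F1 (conj eq_refl (conj eq_refl eq_refl))). exact Hf.
          + rewrite updV_other by auto.
            destruct (classic (KL = k' /\ n = m' /\ g = i')) as [[<- [<- <-]]|N2].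
            * now rewrite !updV_same.
            * rewrite !updV_other by auto. reflexivity.
        - rewrite updV_other by (intros [? [? ?]]; apply N; auto).
          apply force_ext. reflexivity. intros k' m' i'.
          destruct (classic (KL = k' /\ n = m' /\ h = i')) as [[<- [<- <-]]|N1].
          + rewrite updV_same. rewrite (updV_other _ k n0 i) by (intros [? [? ?]]; apply NE; auto). now rewrite updV_same.
          + rewrite updV_other by auto.
            destruct (classic (k = k' /\ n0 = m' /\ i = i')) as [[<- [<- <-]]|N2].
            * now rewrite !updV_same.
            * rewrite !updV_other by auto. reflexivity. }
      split; intros HH c D; apply H; auto.
  - simpl renL. destruct (isL n h k n0 i) eqn:E.
    + destruct (isL_true _ _ _ _ _ E) as [-> [-> ->]]. rewrite !force_FexV.
      assert (forall b c, force s b (updV rho KL n h c) p <-> force s b (updV (updV rho KL n h (eV rho KL n g)) KL n h c) p).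
      { intros b' c. apply force_ext. reflexivity. intros k' m' i'.
        destruct (classic (KL = k' /\ n = m' /\ h = i')) as [[<- [<- <-]]|N].
        now rewrite !updV_same. rewrite !updV_other; auto. }
      setoid_rewrite H. tauto.
    + destruct FF as [F1 F2]. rewrite !force_FexV.
      assert (forall b c, force s b (updV rho k n0 i c) (renL n h g p) <->
                        force s b (updV (updV rho KL n h (eV rho KL n g)) k n0 i c) p).
      { intros b' c. rewrite IHp by auto. pose proof (isL_false _ _ _ _ _ E) as NE.
        destruct (classic (k = KL /\ n0 = n /\ i = g)) as [[-> [-> ->]]|N].
        - apply force_agree. split. reflexivity. intros k' m' i' Hf.
          rewrite updV_same.
          destruct (classic (KL = k' /\ n = m' /\ h = i')) as [[<- [<- <-]]|N1].
          + exfalso. apply (F1 (conj eq_refl (conj eq_refl eq_refl))). exact Hf.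
          + rewrite updV_other by auto.
            destruct (classic (KL = k' /\ n = m' /\ g = i')) as [[<- [<- <-]]|N2].
            * now rewrite !updV_same.
            * rewrite !updV_other by auto. reflexivity.
        - rewrite updV_other by (intros [? [? ?]]; apply N; auto).
          apply force_ext. reflexivity. intros k' m' i'.
          destruct (classic (KL = k' /\ n = m' /\ h = i')) as [[<- [<- <-]]|N1].
          + rewrite updV_same. rewrite (updV_other _ k n0 i) by (intros [? [? ?]]; apply NE; auto). now rewrite updV_same.
          + rewrite updV_other by auto.
            destruct (classic (k = k' /\ n0 = m' /\ i = i')) as [[<- [<- <-]]|N2].
            * now rewrite !updV_same.
            * rewrite !updV_other by auto. reflexivity. }
      setoid_rewrite H. tauto.
  - simpl renL. simpl. setoid_rewrite renT_ev. setoid_rewrite IHp; auto. tauto.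
Qed.

Definition binv {A} (Q : A -> Prop) (g : A -> A) (w : A) : A :=
  match excluded_middle_informative (exists v, Q v /\ g v = w) with
  | left e => proj1_sig (constructive_indefinite_description _ e)
  | right _ => w end.

Lemma binv_spec {A} (Q : A -> Prop) g w : isBij Q g -> Q w -> Q (binv Q g w) /\ g (binv Q g w) = w.
Proof. intros [B1 [B2 B3]] Qw. unfold binv. destruct excluded_middle_informative as [e|N].
  - destruct (constructive_indefinite_description _ e) as [v Hv]. simpl. exact Hv.
  - exfalso. apply N. apply B3, Qw. Qed.

Lemma binv_g {A} (Q : A -> Prop) g v : isBij Q g -> Q v -> binv Q g (g v) = v.
Proof. intros B Qv. pose proof B as [B1 [B2 B3]]. destruct (binv_spec Q g (g v) B (B1 v Qv)) as [H1 H2].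
  apply B2; auto. Qed.

Lemma nth_comp k (x y : Tup k) u d : leT k x y \/ leT k y x -> u < lh k x -> u < lh k y ->
  nth u (lastc k x) d = nth u (lastc k y) d.
Proof. intros [L|L] Hx Hy.
  - apply nth_prefix. now apply leT_lastc. exact Hy.
  - symmetry. apply nth_prefix. now apply leT_lastc. exact Hx. Qed.

Lemma STp_fix_n n pi (y : Tup n) :
  (forall u, u < lh n y -> pi u (nth u (lastc n y) (dflt n)) = nth u (lastc n y) (dflt n)) ->
  STp n pi n y = y.
Proof. intros H. destruct n; simpl.
  - rewrite piL_n. apply (pm_fix pi 0 y 0). intros m Hm. apply H. exact Hm.
  - destruct y as [y1 y2]. simpl. rewrite STp_low by lia. f_equal.
    rewrite piL_n. apply (pm_fix pi 0 y2 (dflt (S n))). intros m Hm. apply H. exact Hm.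
Qed.

Lemma STp_fix_up n pi d (x : Tup (d + n)) : STp n pi n (trunc d n x) = trunc d n x -> STp n pi (d + n) x = x.
Proof. induction d; simpl; auto. intros H. destruct x as [x1 x2]. simpl in *. rewrite IHd by auto. f_equal.
  apply pm_id. intros. rewrite piL_ne by lia. reflexivity. Qed.

Lemma STp_fix n pi k x xn : trunc_opt k n x = Some xn ->
  (forall u, u < lh n xn -> pi u (nth u (lastc n xn) (dflt n)) = nth u (lastc n xn) (dflt n)) ->
  STp n pi k x = x.
Proof. unfold trunc_opt. destruct (le_dec n k) as [l|l]; [|discriminate].
  generalize (eq_sym (Nat.sub_add n k l)). generalize (k - n). intros d e. subst k. simpl.
  intros E H. injection E as <-. apply STp_fix_up. now apply STp_fix_n. Qed.

Lemma ev_S_plus_vars s b rho a c : ev s b rho (tS (tplus (tvar0 a) (tvar0 c))) = Some (S (e0 rho a + e0 rho c) : R 0).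
Proof. reflexivity. Qed.

Lemma LL3_holds s n h g x y p : S n <= s ->
  (forall k m i, freeV k m i p -> m <= n) ->
  (forall i, ~ freeV KF n i p) ->
  (forall i, freeV KL n i p -> i = h) ->
  g <> h -> freefor n h g p -> x <> y -> ~ free0 x p ->
  forall rho, envOK s rho -> root_forces s rho (LL3 n h g x y p).
Proof. intros hn Hsort HnoF HL hgh FF hxy hx0 rho ok.
  unfold root_forces, LL3. rewrite force_Fimp. intros al Val _ Hp.
  set (k := pred s) in *. assert (hnk : n <= k) by (unfold k; lia).
  rewrite force_Fex0. intros P HP Pal. exists al. split; auto. exists (lh k al).
  rewrite force_FallV. intros Gv HG. rewrite force_Fimp. intros be Vbe Lbe Hag.
  change (Init.Nat.pred s) with k in Val, Hp, Vbe, Lbe, Hag, HP, Pal.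
  set (Hv := eV rho KL n h).
  assert (HH : inL n Hv) by apply (ok KL n h hn).
  destruct HH as [xiH [bH eH]]. destruct HG as [xiG [bG eG]].
  destruct (topt_some k n al hnk) as [aln Ealn].
  destruct (topt_valid _ _ _ _ Val Ealn) as [Valn Lalnl].
  destruct (topt_some k n be hnk) as [ben Eben].
  destruct (topt_valid _ _ _ _ Vbe Eben) as [Vben Lbenl].
  assert (Lbeal : leT n ben aln) by (eapply topt_leT; eauto).
  pose proof (leT_lh _ _ _ Lbe) as Hlh.
  set (e := fun u => nth u (lastc n aln) (dflt n)).
  assert (eA : forall u, u < lh k al -> inA n (e u)).
  { intros u Hu. unfold e. apply Forall_nth. now apply valid_lastc.
    change (length (lastc n aln)) with (lh n aln). lia. }
  assert (Agr : forall u, u < lh k al -> xiG u (e u) = xiH u (e u)).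
  { intros u Hu. unfold Fall_lt in Hag. rewrite force_Fall0 in Hag. specialize (Hag u).
    rewrite force_Fimp in Hag. specialize (Hag be Vbe (leT_refl _ _)).
    set (r := upd0 (updV (upd0 rho x (lh k al)) KL n g Gv) y u) in Hag.
    assert (Prem : force s be r (Fex0 (S (x + y)) (Feq 0 (tS (tplus (tvar0 y) (tvar0 (S (x + y))))) (tvar0 x)))).
    { rewrite force_Fex0. intros Q HQ Qbe. exists be. split; auto. exists (lh k al - S u).
      rewrite force_Feq. intros Q' HQ' Qbe'. exists be. split; auto. exists (lh k al).
      rewrite ev_S_plus_vars, ev_var. unfold r.
      rewrite (upd0_other _ (S (x + y)) _ y) by lia. rewrite upd0_same, upd0_same.
      rewrite (upd0_other _ (S (x + y)) _ x) by lia. rewrite (upd0_other _ y _ x) by lia.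
      rewrite updV_e0, upd0_same. split; f_equal; lia. }
    specialize (Hag Prem). rewrite force_Feq in Hag.
    destruct (path_exists _ _ Vbe) as [Q [HQ Qbe]].
    destruct (Hag Q HQ Qbe) as [ga [Qga [v [E1 E2]]]].
    rewrite !ev_Ap_V in E1, E2. fold k in E1, E2.
    destruct (trunc_opt k n ga) as [gan|] eqn:Egan; [|discriminate].
    unfold r in E1, E2. rewrite !upd0_eV, upd0_same in E1, E2.
    rewrite updV_same in E1. rewrite updV_other in E2 by (intros [_ [_ ?]]; congruence).
    rewrite upd0_eV in E2. fold Hv in E2.
    assert (Vga : validD k ga) by (eapply path_valid; eauto).
    destruct (topt_valid _ _ _ _ Vga Egan) as [Vgan Lgan].
    destruct (classic (validD n gan /\ u < lh n gan)) as [C|C].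
    2: { rewrite (proj2 (eG gan u)) in E1 by exact C. discriminate. }
    rewrite (proj1 (eG gan u) C) in E1. rewrite (proj1 (eH gan u) C) in E2.
    injection E1 as E1. injection E2 as E2.
    assert (Eq : nth u (lastc n gan) (dflt n) = e u).
    { unfold e. transitivity (nth u (lastc n ben) (dflt n)).
      - apply nth_comp. destruct (path_chain _ _ _ _ HQ Qga Qbe); [left|right]; eapply topt_leT; eauto.
        apply C. lia.
      - apply nth_comp. now left. lia. lia. }
    rewrite Eq in E1, E2. congruence. }
  set (pi := fun u v => if excluded_middle_informative (inA n v) then binv (inA n) (xiG u) (xiH u v) else v).
  set (pi' := fun u v => if excluded_middle_informative (inA n v) then binv (inA n) (xiH u) (xiG u v) else v).
  assert (BG : forall u, isBij (inA n) (xiG u)) by apply bG.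
  assert (BH : forall u, isBij (inA n) (xiH u)) by apply bH.
  assert (PP : perm_pair n pi pi').
  { assert (K : forall (f1 f2 : nat -> R n -> R n), (forall u, isBij (inA n) (f1 u)) -> (forall u, isBij (inA n) (f2 u)) ->
       forall u v, (fun u v => if excluded_middle_informative (inA n v) then binv (inA n) (f2 u) (f1 u v) else v) u
                   ((fun u v => if excluded_middle_informative (inA n v) then binv (inA n) (f1 u) (f2 u v) else v) u v) = v).
    { intros f1 f2 B1 B2 u v. simpl. destruct (excluded_middle_informative (inA n v)) as [Iv|Iv].
      - destruct (binv_spec (inA n) (f1 u) (f2 u v) (B1 u) (proj1 (B2 u) v Iv)) as [I1 E1].
        destruct excluded_middle_informative as [_|N]; [|contradiction].
        rewrite E1. apply binv_g; auto.
      - destruct excluded_middle_informative; [contradiction|auto]. }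
    assert (K2 : forall (f1 f2 : nat -> R n -> R n), (forall u, isBij (inA n) (f1 u)) -> (forall u, isBij (inA n) (f2 u)) ->
       forall u v, inA n v -> inA n ((fun u v => if excluded_middle_informative (inA n v) then binv (inA n) (f1 u) (f2 u v) else v) u v)).
    { intros f1 f2 B1 B2 u v Iv. simpl. destruct excluded_middle_informative; [|contradiction].
      apply binv_spec; auto. apply (proj1 (B2 u)), Iv. }
    split; [|split; [|split]].
    - apply (K xiG xiH BG BH).
    - apply (K xiH xiG BH BG).
    - apply (K2 xiG xiH BG BH).
    - apply (K2 xiH xiG BH BG). }
  assert (Fal : STp n pi' k al = al).
  { apply (STp_fix n pi' k al aln Ealn). intros u Hu. fold (e u). unfold pi'.
    assert (Hu' : u < lh k al) by lia.
    destruct excluded_middle_informative as [_|N]; [|exfalso; apply N, eA, Hu'].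
    rewrite Agr by exact Hu'. apply binv_g; auto. }
  set (b0 := STp n pi' k be).
  assert (Vb0 : validD k b0) by (apply valid_STp; auto; apply PP).
  assert (Lb0 : leT k b0 al) by (rewrite <- Fal; now apply leT_STp).
  assert (F0 : force s b0 rho p) by (apply (force_mono s p al); auto).
  apply (force_S s n pi pi' PP) in F0. fold k in F0. unfold b0 in F0.
  rewrite (STp_inv n pi' pi k be (proj1 (proj2 PP))) in F0.
  apply renL_force; auto. rewrite updV_same.
  refine (proj2 (force_agree s p be _ _ _) F0). split.
  - intros i Hi. rewrite updV_e0. unfold envS; cbn [e0]. rewrite updV_e0, upd0_other; auto. intros ->. contradiction.
  - intros k' m i Hf. rewrite envS_eV.
    destruct (classic (KL = k' /\ n = m /\ h = i)) as [[<- [<- <-]]|N].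
    + rewrite updV_same. fold Hv. symmetry.
      apply functional_extensionality; intros z. apply functional_extensionality; intros u.
      change (SRp n pi' (S n) Hv z u) with (option_map (SRp n pi' n) (Hv (STp n pi' n z) u)).
      replace (option_map (SRp n pi' n) (Hv (STp n pi' n z) u)) with (Hv (STp n pi' n z) u)
        by (destruct (Hv (STp n pi' n z) u); simpl; auto; f_equal; symmetry; apply SR_low; lia).
      destruct (classic (validD n z /\ u < lh n z)) as [C|C].
      * rewrite (proj1 (eG z u) C). rewrite (proj1 (eH _ u)).
        2: { rewrite lh_STp. split. apply valid_STp; [apply PP|apply C]. apply C. }
        f_equal. rewrite lastc_STp, piL_n, pm_nth. simpl. unfold pi'.
        assert (Ia : inA n (nth u (lastc n z) (dflt n))).
        { apply Forall_nth. now apply valid_lastc. apply C. }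
        destruct excluded_middle_informative; [|contradiction].
        apply binv_spec; auto. apply (proj1 (BG u)), Ia. apply C.
      * rewrite (proj2 (eG z u) C). rewrite (proj2 (eH _ u)). reflexivity.
        rewrite lh_STp. rewrite (valid_STp_iff n pi' pi n z (perm_pair_sym _ _ _ PP)). exact C.
    + rewrite updV_other by exact N.
      assert (Ng : ~ (KL = k' /\ n = m /\ g = i)).
      { intros [<- [<- <-]]. apply hgh. apply HL, Hf. }
      rewrite updV_other by exact Ng. simpl eV.
      pose proof (Hsort _ _ _ Hf) as Hm.
      destruct (Nat.eq_dec m n) as [->|Hmn].
      * destruct k'.
        -- exfalso. apply (HnoF i Hf).
        -- symmetry. apply (SR_lawlike n pi pi' _ PP). apply (ok KA n i hn).
        -- exfalso. apply N. split; auto. split; auto. symmetry. apply HL, Hf.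
      * symmetry. apply SR_low. lia.
Qed.

Theorem theorem8p1 (s : nat) (hs : 1 <= s) :
  (* (LL1), types n+1 <= s, all instances (x <> y), universal closure *)
  (forall n x y F f, S n <= s -> x <> y ->
     forall rho, envOK s rho -> root_forces s rho (LL1 n x y F f)) /\
  (* (LL2) *)
  (forall n f g, S n <= s ->
     forall rho, envOK s rho -> root_forces s rho (LL2 n f g)) /\
  (* (LL3) for every LP_s formula p with sort(p) <= n+1 whose only free
     non-lawlike variable of type n+1 is the lawless H^(n+1)_h *)
  (forall n h g x y (p : fm), S n <= s ->
     wfLP s p ->
     (forall k m i, freeV k m i p -> m <= n) ->
     (forall i, ~ freeV KF n i p) ->
     (forall i, freeV KL n i p -> i = h) ->
     g <> h -> freefor n h g p ->
     x <> y -> ~ free0 x p ->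
     forall rho, envOK s rho -> root_forces s rho (LL3 n h g x y p)).
Proof.
  split; [|split].
  - intros n x y F f hn hxy rho ok. apply LL1_holds; auto.
  - intros n f g hn rho ok. apply LL2_holds.
  - intros n h g x y p hn _ Hs HF HL hgh FF hxy hx rho ok. apply (LL3_holds s n h g x y p); auto.
Qed.
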